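(* Let $n\ge3$, $1\le\lambda\le n-1$, and let $(N_\epsilon,g)$ be the neighbourhood geometry of type $(\lambda,n-\lambda)$. Then: (i) if $q\in\mathcal{F}$ then $\mathcal{P}\subset I^-(q)$; (ii) if $q\in\partial\mathcal{F}$ then $I^+(q)\subset\mathcal{F}$; (iii) if $q\in\partial\mathcal{F}$, then (a) if $\lambda\ne1$ then $\mathcal{P}\subset I^-(q)$, and (b) if $\lambda=1$ then either $I^-(q)\cap\mathcal{P}_2=\emptyset$ or $I^-(q)\cap\mathcal{P}_1=\emptyset$.
   Context: Neighbourhood geometry of type $(\lambda,n-\lambda)$: fix $\epsilon>0$ and $\zeta>1$; let $N_\epsilon=D_\epsilon\setminus\{0\}$, where $D_\epsilon$ is the open ball of radius $\epsilon$ about $0$ in $\mathbb{R}^n$ with Cartesian coordinates $(x^1,\dots,x^\lambda,y^1,\dots,y^{n-\lambda})$. Let $f=c-\sum_i(x^i)^2+\sum_j(y^j)^2$ ($c$ a constant), $h$ the flat Euclidean metric, and $g_{\mu\nu}=h_{\mu\nu}(h^{\alpha\beta}\partial_\alpha f\partial_\beta f)-\zeta\partial_\mu f\partial_\nu f$, a Lorentzian metric on $N_\epsilon$ time-oriented so that $f$ increases to the future. All chronological relations are taken within $N_\epsilon$: $a\ll b$ iff there is a future directed $C^1$ timelike curve in $N_\epsilon$ from $a$ to $b$; $I^+(a)=\{b:a\ll b\}$, $I^-(a)=\{b:b\ll a\}$. Let $\rho=(\sum_i(x^i)^2)^{1/2}$, $r=(\sum_j(y^j)^2)^{1/2}$,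 $m_1=(\sqrt\zeta-1)/\sqrt{\zeta-1}$, $m_2=(\sqrt\zeta+1)/\sqrt{\zeta-1}=1/m_1$. Define $\mathcal{P}=\{q\in N_\epsilon:r<m_1\rho\}$, $\mathcal{F}=\{q\in N_\epsilon:r>m_2\rho\}$, $\partial\mathcal{F}=\{q\in N_\epsilon: r=m_2\rho\}$. When $\lambda=1$, $\mathcal{P}_1=\{q\in\mathcal{P}:x^1>0\}$ and $\mathcal{P}_2=\{q\in\mathcal{P}:x^1<0\}$. *)

(* Defs.v *)
From Stdlib Require Import Reals.
From Coquelicot Require Import Coquelicot.
Open Scope R_scope.

(* Points of R^n are represented as functions nat -> R; only the coordinates
   0 .. n-1 are meaningful.  Coordinates 0 .. lam-1 are x^1..x^lam,
   coordinates lam .. n-1 are y^1..y^(n-lam). *)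

Fixpoint sumR (k : nat) (F : nat -> R) : R :=
  match k with
  | O => 0
  | S k' => sumR k' F + F k'
  end.

Definition hdot (n : nat) (v w : nat -> R) : R := sumR n (fun i => v i * w i).

Definition rho (lam : nat) (p : nat -> R) : R := sqrt (sumR lam (fun i => p i ^ 2)).
Definition rr (n lam : nat) (p : nat -> R) : R :=
  sqrt (sumR (n - lam) (fun j => p (lam + j)%nat ^ 2)).

Definition fP (n lam : nat) (c : R) (p : nat -> R) : R :=
  c - sumR lam (fun i => p i ^ 2) + sumR (n - lam) (fun j => p (lam + j)%nat ^ 2).

(* its partial derivatives  d_i f (p) : -2 x^i for the x-coordinates,
   2 y^j for the y-coordinates (independent of c) *)
Definition df (lam : nat) (p : nat -> R) (i : nat) : R :=
  if Nat.ltb i lam then -2 * p i else 2 * p i.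

Definition gmet (n lam : nat) (zeta : R) (p v w : nat -> R) : R :=
  hdot n v w * hdot n (df lam p) (df lam p)
  - zeta * hdot n (df lam p) v * hdot n (df lam p) w.

Definition fut_timelike (n lam : nat) (zeta : R) (p v : nat -> R) : Prop :=
  gmet n lam zeta p v v < 0 /\ 0 < hdot n (df lam p) v.

Definition inN (n : nat) (eps : R) (p : nat -> R) : Prop :=
  0 < hdot n p p /\ hdot n p p < eps ^ 2.

(* a << b within N_eps: there is a C^1 curve gamma (given by its components
   gamma i, i < n), parametrised by [0,1], lying in N_eps, from a to b, whose
   velocity is everywhere future directed timelike.  (C^1 on [0,1] is
   expressed as: the components are C^1 on all of R; any C^1 map on [0,1]
   extends to such a map.) *)
Definition chron (n lam : nat) (eps zeta : R) (a b : nat -> R) : Prop :=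
  exists gamma : nat -> R -> R,
    (forall i, (i < n)%nat -> forall t, ex_derive (gamma i) t) /\
    (forall i, (i < n)%nat -> forall t, continuous (Derive (gamma i)) t) /\
    (forall i, (i < n)%nat -> gamma i 0 = a i /\ gamma i 1 = b i) /\
    (forall t, 0 <= t <= 1 -> inN n eps (fun i => gamma i t)) /\
    (forall t, 0 <= t <= 1 ->
       fut_timelike n lam zeta (fun i => gamma i t) (fun i => Derive (gamma i) t)).

Definition m1 (zeta : R) : R := (sqrt zeta - 1) / sqrt (zeta - 1).
Definition m2 (zeta : R) : R := (sqrt zeta + 1) / sqrt (zeta - 1).

Definition inP (n lam : nat) (eps zeta : R) (q : nat -> R) : Prop :=
  inN n eps q /\ rr n lam q < m1 zeta * rho lam q.
Definition inF (n lam : nat) (eps zeta : R) (q : nat -> R) : Prop :=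
  inN n eps q /\ rr n lam q > m2 zeta * rho lam q.
Definition inbdF (n lam : nat) (eps zeta : R) (q : nat -> R) : Prop :=
  inN n eps q /\ rr n lam q = m2 zeta * rho lam q.
Definition inP1 (n lam : nat) (eps zeta : R) (q : nat -> R) : Prop :=
  inP n lam eps zeta q /\ q 0%nat > 0.
Definition inP2 (n lam : nat) (eps zeta : R) (q : nat -> R) : Prop :=
  inP n lam eps zeta q /\ q 0%nat < 0.

(* Main.v *)
Require Import Defs.
From Stdlib Require Import Reals Lra Lia Psatz FunctionalExtensionality.
From Coquelicot Require Import Coquelicot.
Open Scope R_scope.

Lemma sumR_ext k F G : (forall i, (i < k)%nat -> F i = G i) -> sumR k F = sumR k G.
Proof. induction k; simpl; intros H; auto. rewrite IHk, H; auto. Qed.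

Lemma sumR_plus k F G : sumR k (fun i => F i + G i) = sumR k F + sumR k G.
Proof. induction k; simpl; [lra|]. rewrite IHk; ring. Qed.

Lemma sumR_scal k c F : sumR k (fun i => c * F i) = c * sumR k F.
Proof. induction k; simpl; [ring|]. rewrite IHk; ring. Qed.

Lemma sumR_nonneg k F : (forall i, (i < k)%nat -> 0 <= F i) -> 0 <= sumR k F.
Proof. induction k; simpl; intros H; [lra|]. pose proof (H k ltac:(lia)). pose proof (IHk ltac:(intros; apply H; lia)). lra. Qed.

Lemma sumR_split a b F : sumR (a + b) F = sumR a F + sumR b (fun j => F (a + j)%nat).
Proof. induction b; simpl. rewrite Nat.add_0_r; ring. rewrite Nat.add_succ_r; simpl. rewrite IHb; ring. Qed.

Lemma sumR_zero_sq k F : (forall i, (i<k)%nat -> 0 <= F i) -> sumR k F = 0 -> forall i, (i<k)%nat -> F i = 0.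
Proof.
  induction k; simpl; intros H Hs i Hi; [lia|].
  pose proof (sumR_nonneg k F ltac:(intros; apply H; lia)).
  pose proof (H k ltac:(lia)).
  destruct (Nat.eq_dec i k).
  - subst. lra.
  - apply IHk; [intros j Hj; apply H; lia | lra | lia].
Qed.

Definition vJ (lam : nat) (u : nat -> R) : nat -> R := fun i => if Nat.ltb i lam then - u i else u i.

Lemma hdot_sym n u v : hdot n u v = hdot n v u.
Proof. unfold hdot. apply sumR_ext; intros; ring. Qed.

Lemma hdot_ext n u u' v v' : (forall i, (i<n)%nat -> u i = u' i) -> (forall i, (i<n)%nat -> v i = v' i) ->
  hdot n u v = hdot n u' v'.
Proof. intros H1 H2; unfold hdot; apply sumR_ext; intros i Hi; rewrite H1, H2; auto. Qed.

Lemma hdot_lin2l n a b u v w : hdot n (fun i => a * u i + b * v i) w = a * hdot n u w + b * hdot n v w.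
Proof. unfold hdot. rewrite <- !sumR_scal, <- sumR_plus. apply sumR_ext; intros; ring. Qed.

Lemma hdot_lin2r n a b u v w : hdot n w (fun i => a * u i + b * v i) = a * hdot n w u + b * hdot n w v.
Proof. rewrite hdot_sym, hdot_lin2l, (hdot_sym n u), (hdot_sym n v); auto. Qed.

Lemma hdot_scall n a u w : hdot n (fun i => a * u i) w = a * hdot n u w.
Proof. unfold hdot. rewrite <- sumR_scal. apply sumR_ext; intros; ring. Qed.

Lemma hdot_scalr n a u w : hdot n w (fun i => a * u i) = a * hdot n w u.
Proof. rewrite hdot_sym, hdot_scall, hdot_sym; auto. Qed.

Lemma hdot_pos n u : 0 <= hdot n u u.
Proof. unfold hdot. apply sumR_nonneg; intros; nra. Qed.

Lemma hdot_J_J n lam u v : hdot n (vJ lam u) (vJ lam v) = hdot n u v.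
Proof. unfold hdot, vJ. apply sumR_ext; intros i _. destruct (Nat.ltb i lam); ring. Qed.

Lemma hdot_J_sym n lam u v : hdot n (vJ lam u) v = hdot n u (vJ lam v).
Proof. unfold hdot, vJ. apply sumR_ext; intros i _. destruct (Nat.ltb i lam); ring. Qed.

Lemma vJ_lin2 lam a b u v : vJ lam (fun i => a * u i + b * v i) = (fun i => a * vJ lam u i + b * vJ lam v i).
Proof. apply functional_extensionality; intros i; unfold vJ; destruct (Nat.ltb i lam); ring. Qed.

Lemma vJ_scal lam a u : vJ lam (fun i => a * u i) = (fun i => a * vJ lam u i).
Proof. apply functional_extensionality; intros i; unfold vJ; destruct (Nat.ltb i lam); ring. Qed.

Definition nrm n u := sqrt (hdot n u u).

Lemma nrm_pos n u : 0 <= nrm n u.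
Proof. apply sqrt_pos. Qed.

Lemma nrm_sq n u : nrm n u * nrm n u = hdot n u u.
Proof. apply sqrt_sqrt, hdot_pos. Qed.

Lemma CS n u v : hdot n u v * hdot n u v <= hdot n u u * hdot n v v.
Proof.
  assert (Hq : forall t, 0 <= hdot n u u + 2 * t * hdot n u v + t * t * hdot n v v).
  { intros t. pose proof (hdot_pos n (fun i => 1 * u i + t * v i)) as H.
    rewrite hdot_lin2l, !hdot_lin2r in H. rewrite (hdot_sym n v u) in H. lra. }
  pose proof (hdot_pos n u). pose proof (hdot_pos n v).
  destruct (Req_dec (hdot n v v) 0) as [Hz|Hz].
  - destruct (Req_dec (hdot n u v) 0) as [Hz2|Hz2].
    + rewrite Hz2, Hz; nra.
    + exfalso. pose proof (Hq (- (hdot n u u + 1) / (2 * hdot n u v))) as H1.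
      rewrite Hz in H1.
      assert (2 * (- (hdot n u u + 1) / (2 * hdot n u v)) * hdot n u v = - (hdot n u u + 1)) by (field; auto).
      lra.
  - pose proof (Hq (- hdot n u v / hdot n v v)) as H1.
    assert (0 < hdot n v v) by lra.
    assert (HH2: 0 <= (hdot n u u * hdot n v v - hdot n u v * hdot n u v) / hdot n v v).
    { replace ((hdot n u u * hdot n v v - hdot n u v * hdot n u v) / hdot n v v) with
      (hdot n u u + 2 * (- hdot n u v / hdot n v v) * hdot n u v +
       (- hdot n u v / hdot n v v) * (- hdot n u v / hdot n v v) * hdot n v v) by (field; lra). auto. }
    assert (0 <= hdot n u u * hdot n v v - hdot n u v * hdot n u v).
    { unfold Rdiv in HH2. apply Rmult_le_reg_r with (/ hdot n v v). apply Rinv_0_lt_compat; lra. lra. }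
    lra.
Qed.

Lemma sumR_minus k F G : sumR k (fun i => F i - G i) = sumR k F - sumR k G.
Proof. induction k; simpl; [lra|]. rewrite IHk; ring. Qed.


Lemma hdot_addl n u v w : hdot n (fun i => u i + v i) w = hdot n u w + hdot n v w.
Proof. unfold hdot. rewrite <- sumR_plus. apply sumR_ext; intros; ring. Qed.
Lemma hdot_addr n u v w : hdot n w (fun i => u i + v i) = hdot n w u + hdot n w v.
Proof. rewrite hdot_sym, hdot_addl, (hdot_sym n u), (hdot_sym n v); auto. Qed.

Lemma CS_abs n u v : Rabs (hdot n u v) <= nrm n u * nrm n v.
Proof.
  pose proof (CS n u v). pose proof (nrm_sq n u). pose proof (nrm_sq n v).
  pose proof (nrm_pos n u). pose proof (nrm_pos n v).
  assert (0 <= nrm n u * nrm n v) by nra.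
  destruct (Rle_dec (Rabs (hdot n u v)) (nrm n u * nrm n v)); auto.
  exfalso. assert (Rabs (hdot n u v) * Rabs (hdot n u v) = hdot n u v * hdot n u v).
  { rewrite <- Rabs_mult. apply Rabs_right. nra. }
  nra.
Qed.

Lemma CS_le n u v : hdot n u v <= nrm n u * nrm n v.
Proof. pose proof (CS_abs n u v). pose proof (Rle_abs (hdot n u v)). lra. Qed.

Lemma sqrt_le_of_sq a b : 0 <= b -> a <= b * b -> sqrt a <= b.
Proof.
  intros Hb H. destruct (Rle_dec a 0).
  - rewrite sqrt_neg_0; auto.
  - rewrite <- (sqrt_square b) by auto. apply sqrt_le_1_alt. lra.
Qed.

Lemma nrm_tri n u v : nrm n (fun i => u i + v i) <= nrm n u + nrm n v.
Proof.
  unfold nrm at 1. apply sqrt_le_of_sq. pose proof (nrm_pos n u); pose proof (nrm_pos n v); lra.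
  rewrite hdot_addl, !hdot_addr. rewrite (hdot_sym n v u).
  pose proof (CS_le n u v). pose proof (nrm_sq n u). pose proof (nrm_sq n v). nra.
Qed.

Lemma nrm_scal n c u : nrm n (fun i => c * u i) = Rabs c * nrm n u.
Proof.
  unfold nrm. rewrite hdot_scall, hdot_scalr.
  replace (c * (c * hdot n u u)) with ((c * c) * hdot n u u) by ring.
  rewrite sqrt_mult_alt by nra. f_equal. apply sqrt_Rsqr_abs.
Qed.

Lemma nrm_J n lam u : nrm n (vJ lam u) = nrm n u.
Proof. unfold nrm. rewrite hdot_J_J. auto. Qed.

Lemma df_eq lam z : df lam z = (fun i => 2 * vJ lam z i).
Proof. apply functional_extensionality; intros i; unfold df, vJ; destruct (Nat.ltb i lam); ring. Qed.

Lemma sq_lt a b : 0 <= a -> a < b -> a * a < b * b.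
Proof. intros; nra. Qed.
Lemma sq_lt_inv a b : 0 <= a -> 0 <= b -> a * a < b * b -> a < b.
Proof. intros; nra. Qed.

Lemma ft_of n lam zeta z v : 1 < zeta ->
  sqrt zeta * hdot n (vJ lam z) v > nrm n z * nrm n v -> fut_timelike n lam zeta z v.
Proof.
  intros Hz H. unfold fut_timelike, gmet. rewrite df_eq.
  rewrite !hdot_scall, !hdot_scalr, hdot_J_J.
  pose proof (nrm_pos n z) as P1; pose proof (nrm_pos n v) as P2.
  pose proof (nrm_sq n z) as E1; pose proof (nrm_sq n v) as E2.
  assert (Hs : 0 < sqrt zeta) by (apply sqrt_lt_R0; lra).
  assert (Hs2 : sqrt zeta * sqrt zeta = zeta) by (apply sqrt_sqrt; lra).
  assert (Hg : 0 < hdot n (vJ lam z) v) by nra.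
  split; [|lra].
  assert (Hk : nrm n z * nrm n v * (nrm n z * nrm n v) < (sqrt zeta * hdot n (vJ lam z) v) * (sqrt zeta * hdot n (vJ lam z) v)) by (apply sq_lt; nra).
  assert (Ha : nrm n z * nrm n v * (nrm n z * nrm n v) = hdot n z z * hdot n v v) by (rewrite <- E1, <- E2; ring).
  assert (Hb : (sqrt zeta * hdot n (vJ lam z) v) * (sqrt zeta * hdot n (vJ lam z) v) = (sqrt zeta * sqrt zeta) * (hdot n (vJ lam z) v * hdot n (vJ lam z) v)) by ring. rewrite Hs2 in Hb.
  rewrite Ha, Hb in Hk. nra.
Qed.

Lemma ft_to n lam zeta z v : 1 < zeta -> fut_timelike n lam zeta z v ->
  sqrt zeta * hdot n (vJ lam z) v > nrm n z * nrm n v.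
Proof.
  intros Hz [H1 H2]. unfold gmet in H1. rewrite df_eq in H1, H2.
  rewrite !hdot_scall, !hdot_scalr, hdot_J_J in H1. rewrite hdot_scall in H2.
  pose proof (nrm_pos n z) as P1; pose proof (nrm_pos n v) as P2.
  pose proof (nrm_sq n z) as E1; pose proof (nrm_sq n v) as E2.
  assert (Hs : 0 < sqrt zeta) by (apply sqrt_lt_R0; lra).
  assert (Hs2 : sqrt zeta * sqrt zeta = zeta) by (apply sqrt_sqrt; lra).
  assert (Hg : 0 < sqrt zeta * hdot n (vJ lam z) v) by nra.
  apply sq_lt_inv; [nra|lra|].
  assert (Ha : nrm n z * nrm n v * (nrm n z * nrm n v) = hdot n z z * hdot n v v) by (rewrite <- E1, <- E2; ring).
  assert (Hb : (sqrt zeta * hdot n (vJ lam z) v) * (sqrt zeta * hdot n (vJ lam z) v) = (sqrt zeta * sqrt zeta) * (hdot n (vJ lam z) v * hdot n (vJ lam z) v)) by ring. rewrite Hs2 in Hb.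
  rewrite Ha, Hb. nra.
Qed.


Definition xp (lam : nat) (u : nat -> R) : nat -> R := fun i => if Nat.ltb i lam then u i else 0.
Definition yp (lam : nat) (u : nat -> R) : nat -> R := fun i => if Nat.ltb i lam then 0 else u i.

Section Block.
Variables (n lam : nat).
Hypothesis Hln : (lam <= n)%nat.

Lemma hdot_split_gen F : sumR n F = sumR lam F + sumR (n - lam) (fun j => F (lam + j)%nat).
Proof. replace n with (lam + (n - lam))%nat at 1 by lia. apply sumR_split. Qed.

Lemma hdot_xx u v : hdot n (xp lam u) (xp lam v) = sumR lam (fun i => u i * v i).
Proof.
  unfold hdot. rewrite hdot_split_gen.
  rewrite (sumR_ext (n - lam) _ (fun _ => 0 * 0)).
  2:{ intros j Hj. unfold xp. replace (Nat.ltb (lam + j) lam) with false; auto. symmetry; apply Nat.ltb_ge; lia. }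
  rewrite sumR_scal. rewrite Rmult_0_l, Rplus_0_r.
  apply sumR_ext. intros i Hi. unfold xp. replace (Nat.ltb i lam) with true; auto. symmetry; apply Nat.ltb_lt; lia.
Qed.

Lemma hdot_yy u v : hdot n (yp lam u) (yp lam v) = sumR (n - lam) (fun j => u (lam + j)%nat * v (lam + j)%nat).
Proof.
  unfold hdot. rewrite hdot_split_gen.
  rewrite (sumR_ext lam _ (fun _ => 0 * 0)).
  2:{ intros j Hj. unfold yp. replace (Nat.ltb j lam) with true; auto. symmetry; apply Nat.ltb_lt; lia. }
  rewrite sumR_scal. rewrite Rmult_0_l, Rplus_0_l.
  apply sumR_ext. intros i Hi. unfold yp. replace (Nat.ltb (lam + i) lam) with false; auto. symmetry; apply Nat.ltb_ge; lia.
Qed.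

Lemma hdot_xy u v : hdot n (xp lam u) (yp lam v) = 0.
Proof.
  unfold hdot. rewrite (sumR_ext n _ (fun _ => 0 * 0)).
  rewrite sumR_scal; ring.
  intros i _. unfold xp, yp. destruct (Nat.ltb i lam); ring.
Qed.

Lemma hdot_yx u v : hdot n (yp lam u) (xp lam v) = 0.
Proof. rewrite hdot_sym; apply hdot_xy. Qed.

Lemma hdot_decomp u v : hdot n u v = hdot n (xp lam u) (xp lam v) + hdot n (yp lam u) (yp lam v).
Proof.
  rewrite hdot_xx, hdot_yy. unfold hdot. rewrite hdot_split_gen. auto.
Qed.

Lemma hdot_Jdecomp u v : hdot n (vJ lam u) v = hdot n (yp lam u) (yp lam v) - hdot n (xp lam u) (xp lam v).
Proof.
  rewrite hdot_decomp.
  replace (xp lam (vJ lam u)) with (fun i => -1 * xp lam u i).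
  replace (yp lam (vJ lam u)) with (yp lam u).
  rewrite hdot_scall. ring.
  all: apply functional_extensionality; intros i; unfold xp, yp, vJ; destruct (Nat.ltb i lam); ring.
Qed.

Lemma vJ_xp u : vJ lam (xp lam u) = (fun i => -1 * xp lam u i).
Proof. apply functional_extensionality; intros i; unfold xp, vJ; destruct (Nat.ltb i lam); ring. Qed.
Lemma vJ_yp u : vJ lam (yp lam u) = yp lam u.
Proof. apply functional_extensionality; intros i; unfold yp, vJ; destruct (Nat.ltb i lam); ring. Qed.
Lemma xp_yp u i : u i = xp lam u i + yp lam u i.
Proof. unfold xp, yp; destruct (Nat.ltb i lam); ring. Qed.

Lemma rho_eq p : rho lam p = sqrt (hdot n (xp lam p) (xp lam p)).
Proof. unfold rho. rewrite hdot_xx. f_equal. apply sumR_ext; intros; ring. Qed.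
Lemma rr_eq p : rr n lam p = sqrt (hdot n (yp lam p) (yp lam p)).
Proof. unfold rr. rewrite hdot_yy. f_equal. apply sumR_ext; intros; ring. Qed.

End Block.

Section Consts.
Variable zeta : R.
Hypothesis Hz : 1 < zeta.

Lemma sp_gt1 : 1 < sqrt zeta.
Proof. rewrite <- sqrt_1. apply sqrt_lt_1_alt; lra. Qed.
Lemma sp_sq : sqrt zeta * sqrt zeta = zeta.
Proof. apply sqrt_sqrt; lra. Qed.
Lemma k_pos : 0 < sqrt (zeta - 1).
Proof. apply sqrt_lt_R0; lra. Qed.
Lemma k_sq : sqrt (zeta - 1) * sqrt (zeta - 1) = zeta - 1.
Proof. apply sqrt_sqrt; lra. Qed.

Lemma m1_nonneg : 0 <= m1 zeta.
Proof. unfold m1. pose proof sp_gt1; pose proof k_pos. apply Rdiv_le_0_compat; lra. Qed.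
Lemma m2_pos : 0 < m2 zeta.
Proof. unfold m2. pose proof sp_gt1; pose proof k_pos. apply Rdiv_lt_0_compat; lra. Qed.

Lemma m1_sq : m1 zeta * m1 zeta * (sqrt zeta + 1) = sqrt zeta - 1.
Proof.
  unfold m1. pose proof sp_gt1; pose proof k_pos; pose proof k_sq; pose proof sp_sq.
  replace ((sqrt zeta - 1) / sqrt (zeta - 1) * ((sqrt zeta - 1) / sqrt (zeta - 1)) * (sqrt zeta + 1))
    with ((sqrt zeta - 1) * (sqrt zeta - 1) * (sqrt zeta + 1) / (sqrt (zeta - 1) * sqrt (zeta - 1))) by (field; lra).
  rewrite H1. replace (zeta - 1) with ((sqrt zeta - 1) * (sqrt zeta + 1)) by nra.
  field. lra.
Qed.

Lemma m2_sq : m2 zeta * m2 zeta * (sqrt zeta - 1) = sqrt zeta + 1.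
Proof.
  unfold m2. pose proof sp_gt1; pose proof k_pos; pose proof k_sq; pose proof sp_sq.
  replace ((sqrt zeta + 1) / sqrt (zeta - 1) * ((sqrt zeta + 1) / sqrt (zeta - 1)) * (sqrt zeta - 1))
    with ((sqrt zeta + 1) * (sqrt zeta + 1) * (sqrt zeta - 1) / (sqrt (zeta - 1) * sqrt (zeta - 1))) by (field; lra).
  rewrite H1. replace (zeta - 1) with ((sqrt zeta - 1) * (sqrt zeta + 1)) by nra.
  field. lra.
Qed.
End Consts.


Definition Phi n lam zeta p := sqrt zeta * hdot n (vJ lam p) p - hdot n p p.
Definition Psi n lam zeta p := - sqrt zeta * hdot n (vJ lam p) p - hdot n p p.

Section Regions.
Variables (n lam : nat) (eps zeta : R).
Hypothesis Hln : (lam <= n)%nat.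
Hypothesis Hz : 1 < zeta.

Lemma XY_facts p :
  hdot n (vJ lam p) p = hdot n (yp lam p) (yp lam p) - hdot n (xp lam p) (xp lam p) /\
  hdot n p p = hdot n (xp lam p) (xp lam p) + hdot n (yp lam p) (yp lam p) /\
  0 <= hdot n (xp lam p) (xp lam p) /\ 0 <= hdot n (yp lam p) (yp lam p).
Proof.
  split; [apply hdot_Jdecomp; auto|]. split; [apply hdot_decomp; auto|]. split; apply hdot_pos.
Qed.

Lemma inP_margin p : inP n lam eps zeta p -> Psi n lam zeta p > 0.
Proof.
  intros [_ H]. rewrite (rr_eq n lam Hln), (rho_eq n lam Hln) in H. unfold Psi.
  destruct (XY_facts p) as (E1 & E2 & P1 & P2). rewrite E1, E2.
  set (X := hdot n (xp lam p) (xp lam p)) in *. set (Y := hdot n (yp lam p) (yp lam p)) in *.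
  pose proof (m1_nonneg zeta Hz) as M0. pose proof (m1_sq zeta Hz) as M1. pose proof (sp_gt1 zeta Hz) as S1.
  pose proof (sqrt_pos Y) as Q1. pose proof (sqrt_pos X) as Q2.
  assert (HY : Y < m1 zeta * m1 zeta * X).
  { pose proof (sq_lt _ _ Q1 H) as H5. rewrite sqrt_sqrt in H5 by auto.
    replace (m1 zeta * sqrt X * (m1 zeta * sqrt X)) with (m1 zeta * m1 zeta * (sqrt X * sqrt X)) in H5 by ring.
    rewrite sqrt_sqrt in H5 by auto. auto. }
  assert ((sqrt zeta + 1) * Y < (sqrt zeta - 1) * X).
  { rewrite <- M1. nra. }
  nra.
Qed.

Lemma inF_margin p : inF n lam eps zeta p -> Phi n lam zeta p > 0.
Proof.
  intros [_ H]. rewrite (rr_eq n lam Hln), (rho_eq n lam Hln) in H. unfold Phi.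
  destruct (XY_facts p) as (E1 & E2 & P1 & P2). rewrite E1, E2.
  set (X := hdot n (xp lam p) (xp lam p)) in *. set (Y := hdot n (yp lam p) (yp lam p)) in *.
  pose proof (m2_pos zeta Hz) as M0. pose proof (m2_sq zeta Hz) as M1. pose proof (sp_gt1 zeta Hz) as S1.
  pose proof (sqrt_pos Y) as Q1. pose proof (sqrt_pos X) as Q2.
  assert (HY : m2 zeta * m2 zeta * X < Y).
  { assert (Q3 : 0 <= m2 zeta * sqrt X) by nra.
    pose proof (sq_lt _ _ Q3 H) as H6. rewrite (sqrt_sqrt Y) in H6 by auto.
    replace (m2 zeta * sqrt X * (m2 zeta * sqrt X)) with (m2 zeta * m2 zeta * (sqrt X * sqrt X)) in H6 by ring.
    rewrite sqrt_sqrt in H6 by auto. auto. }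
  assert ((sqrt zeta + 1) * X < (sqrt zeta - 1) * Y).
  { rewrite <- M1. nra. }
  nra.
Qed.

Lemma bdF_eq p : inbdF n lam eps zeta p -> Phi n lam zeta p = 0.
Proof.
  intros [_ H]. rewrite (rr_eq n lam Hln), (rho_eq n lam Hln) in H. unfold Phi.
  destruct (XY_facts p) as (E1 & E2 & P1 & P2). rewrite E1, E2.
  set (X := hdot n (xp lam p) (xp lam p)) in *. set (Y := hdot n (yp lam p) (yp lam p)) in *.
  pose proof (m2_pos zeta Hz) as M0. pose proof (m2_sq zeta Hz) as M1. pose proof (sp_gt1 zeta Hz) as S1.
  assert (HY : Y = m2 zeta * m2 zeta * X).
  { rewrite <- (sqrt_sqrt Y), <- (sqrt_sqrt X) by auto. rewrite H. ring. }
  assert ((sqrt zeta + 1) * X = (sqrt zeta - 1) * Y).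
  { rewrite <- M1. rewrite HY. ring. }
  nra.
Qed.

Lemma inF_of p : inN n eps p -> Phi n lam zeta p > 0 -> inF n lam eps zeta p.
Proof.
  intros HN H. split; auto. rewrite (rr_eq n lam Hln), (rho_eq n lam Hln). unfold Phi in H.
  destruct (XY_facts p) as (E1 & E2 & P1 & P2). rewrite E1, E2 in H.
  set (X := hdot n (xp lam p) (xp lam p)) in *. set (Y := hdot n (yp lam p) (yp lam p)) in *.
  pose proof (m2_pos zeta Hz) as M0. pose proof (m2_sq zeta Hz) as M1. pose proof (sp_gt1 zeta Hz) as S1.
  assert (HY : m2 zeta * m2 zeta * X < Y).
  { apply Rmult_lt_reg_r with (sqrt zeta - 1). lra.
    replace (m2 zeta * m2 zeta * X * (sqrt zeta - 1)) with (m2 zeta * m2 zeta * (sqrt zeta - 1) * X) by ring.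
    rewrite M1. nra. }
  replace (m2 zeta * sqrt X) with (sqrt (m2 zeta * m2 zeta * X)).
  apply sqrt_lt_1_alt. split; auto. nra.
  rewrite sqrt_mult_alt by nra. rewrite sqrt_square by lra. auto.
Qed.

End Regions.


Lemma is_derive_eq (f : R -> R) (x l l' : R) : is_derive f x l -> l = l' -> is_derive f x l'.
Proof. intros H ->; auto. Qed.

Lemma chron_of n lam eps zeta a b (g dg : nat -> R -> R) :
  (forall i t, is_derive (g i) t (dg i t)) ->
  (forall i t, continuous (dg i) t) ->
  (forall i, (i < n)%nat -> g i 0 = a i /\ g i 1 = b i) ->
  (forall t, 0 <= t <= 1 -> inN n eps (fun i => g i t)) ->
  (forall t, 0 <= t <= 1 -> fut_timelike n lam zeta (fun i => g i t) (fun i => dg i t)) ->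
  chron n lam eps zeta a b.
Proof.
  intros Hd Hc He HN HT.
  assert (HD : forall i, Derive (g i) = dg i).
  { intros i; apply functional_extensionality; intros t; apply is_derive_unique; auto. }
  exists g. split; [|split; [|split; [|split]]].
  - intros j _ s. exists (dg j s). auto.
  - intros j _ s. rewrite HD. auto.
  - intros j Hj; apply He; auto.
  - intros s Hs. apply HN; auto.
  - intros s Hs. rewrite (functional_extensionality (fun i => Derive (g i) s) (fun i => dg i s)).
    apply HT; auto. intros i; rewrite HD; auto.
Qed.

Lemma sumR_derive k (F dF : nat -> R -> R) t :
  (forall i, (i < k)%nat -> is_derive (F i) t (dF i t)) ->
  is_derive (fun s => sumR k (fun i => F i s)) t (sumR k (fun i => dF i t)).
Proof.
  induction k; intros H; simpl.
  - auto_derive; auto.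
  - apply (is_derive_plus (fun s => sumR k (fun i => F i s)) (F k)).
    apply IHk; intros; apply H; lia. apply H; lia.
Qed.

Definition wt (lam : nat) (zeta : R) (i : nat) : R := sqrt zeta * (if Nat.ltb i lam then -1 else 1) - 1.

Lemma Phi_sum n lam zeta z : Phi n lam zeta z = sumR n (fun i => wt lam zeta i * (z i * z i)).
Proof.
  unfold Phi, hdot. rewrite <- sumR_scal, <- sumR_minus.
  apply sumR_ext; intros i _. unfold wt, vJ. destruct (Nat.ltb i lam); ring.
Qed.

Lemma dPhi_sum n lam zeta z v :
  sumR n (fun i => wt lam zeta i * (2 * z i * v i)) = 2 * (sqrt zeta * hdot n (vJ lam z) v - hdot n z v).
Proof.
  unfold hdot. rewrite <- (sumR_scal n (sqrt zeta)), <- sumR_minus, <- sumR_scal.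
  apply sumR_ext; intros i _. unfold wt, vJ. destruct (Nat.ltb i lam); ring.
Qed.

Section Mono.
Variables (n lam : nat) (eps zeta : R).
Hypothesis Hz : 1 < zeta.
Variable gamma : nat -> R -> R.
Hypothesis Hd : forall i, (i < n)%nat -> forall t, ex_derive (gamma i) t.
Hypothesis HT : forall t, 0 <= t <= 1 ->
       fut_timelike n lam zeta (fun i => gamma i t) (fun i => Derive (gamma i) t).

Lemma Phi_curve_derive t : is_derive (fun s => Phi n lam zeta (fun i => gamma i s)) t
   (2 * (sqrt zeta * hdot n (vJ lam (fun i => gamma i t)) (fun i => Derive (gamma i) t)
          - hdot n (fun i => gamma i t) (fun i => Derive (gamma i) t))).
Proof.
  apply is_derive_ext with (fun s => sumR n (fun i => wt lam zeta i * (gamma i s * gamma i s))).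
  { intros s; rewrite Phi_sum; auto. }
  rewrite <- dPhi_sum.
  apply (sumR_derive n (fun i s => wt lam zeta i * (gamma i s * gamma i s))
                       (fun i t => wt lam zeta i * (2 * gamma i t * Derive (gamma i) t))).
  intros i Hi. destruct (Hd i Hi t) as [l Hl]. pose proof (is_derive_unique _ _ _ Hl) as HU.
  rewrite HU. auto_derive.
  - split; [apply (Hd i Hi)| split; [apply (Hd i Hi)|exact I]].
  - change (fun x : R => gamma i x) with (gamma i). rewrite HU. ring.
Qed.

Lemma Phi_curve_mono t1 t2 : 0 <= t1 -> t1 < t2 -> t2 <= 1 ->
  Phi n lam zeta (fun i => gamma i t1) < Phi n lam zeta (fun i => gamma i t2).
Proof.
  intros H1 H2 H3.
  destruct (MVT_cor2 (fun s => Phi n lam zeta (fun i => gamma i s))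
    (fun t => 2 * (sqrt zeta * hdot n (vJ lam (fun i => gamma i t)) (fun i => Derive (gamma i) t)
          - hdot n (fun i => gamma i t) (fun i => Derive (gamma i) t))) t1 t2 H2) as [c [Hc1 Hc2]].
  { intros c Hc. apply is_derive_Reals. apply Phi_curve_derive. }
  assert (Hpos : 0 < 2 * (sqrt zeta * hdot n (vJ lam (fun i => gamma i c)) (fun i => Derive (gamma i) c)
          - hdot n (fun i => gamma i c) (fun i => Derive (gamma i) c))).
  { pose proof (ft_to n lam zeta _ _ Hz (HT c ltac:(lra))).
    pose proof (CS_le n (fun i => gamma i c) (fun i => Derive (gamma i) c)). lra. }
  nra.
Qed.
End Mono.


Lemma vJ_ext n lam u v : (forall i, (i < n)%nat -> u i = v i) -> forall i, (i < n)%nat -> vJ lam u i = vJ lam v i.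
Proof. intros H i Hi; unfold vJ; rewrite H; auto. Qed.

Lemma Phi_ext n lam zeta u v : (forall i, (i < n)%nat -> u i = v i) -> Phi n lam zeta u = Phi n lam zeta v.
Proof.
  intros H. unfold Phi. rewrite (hdot_ext n (vJ lam u) (vJ lam v) u v); [|apply vJ_ext; auto|auto].
  rewrite (hdot_ext n u v u v); auto.
Qed.

Lemma inN_ext n eps u v : (forall i, (i < n)%nat -> u i = v i) -> inN n eps u -> inN n eps v.
Proof. intros H [H1 H2]. unfold inN. rewrite <- (hdot_ext n u v u v); auto. Qed.

Lemma cont_of_der (f : R -> R) : (forall t, ex_derive f t) -> continuity f.
Proof. intros H x. apply continuity_pt_filterlim. apply (ex_derive_continuous (K := R_AbsRing) (V := R_NormedModule)). auto. Qed.

Section Part2.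
Variables (n lam : nat) (eps zeta : R).
Hypothesis Hln : (lam <= n)%nat.
Hypothesis Hz : 1 < zeta.

Lemma part_ii q : inbdF n lam eps zeta q -> forall p, chron n lam eps zeta q p -> inF n lam eps zeta p.
Proof.
  intros Hq p [g [Hd [Hc [He [HN HT]]]]].
  pose proof (bdF_eq n lam eps zeta Hln Hz q Hq) as H0.
  pose proof (Phi_curve_mono n lam zeta Hz g Hd HT 0 1 ltac:(lra) ltac:(lra) ltac:(lra)) as Hm.
  rewrite (Phi_ext n lam zeta (fun i => g i 0) q) in Hm by (intros; apply He; auto).
  rewrite (Phi_ext n lam zeta (fun i => g i 1) p) in Hm by (intros; apply He; auto).
  apply inF_of; auto.
  apply inN_ext with (fun i => g i 1). intros; apply He; auto. apply HN; lra.
  lra.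
Qed.

Lemma X_pos_of_Phi_neg z : Phi n lam zeta z < 0 -> 0 < hdot n (xp lam z) (xp lam z).
Proof.
  intros H. unfold Phi in H. destruct (XY_facts n lam Hln z) as (E1 & E2 & P1 & P2).
  rewrite E1, E2 in H. pose proof (sp_gt1 zeta Hz). nra.
Qed.

End Part2.

Lemma part_iiib n lam eps zeta (Hln : (lam <= n)%nat) (Hz : 1 < zeta) (Hn : (1 <= n)%nat) q :
  inbdF n lam eps zeta q -> lam = 1%nat ->
     (forall p, inP2 n lam eps zeta p -> ~ chron n lam eps zeta p q) \/
     (forall p, inP1 n lam eps zeta p -> ~ chron n lam eps zeta p q).
Proof.
  intros Hq Hl. subst lam.
  pose proof (bdF_eq n 1 eps zeta Hln Hz q Hq) as H0.
  assert (HX : forall z, hdot n (xp 1 z) (xp 1 z) = z 0%nat * z 0%nat).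
  { intros z. rewrite hdot_xx by auto. simpl. ring. }
  assert (Hq0 : q 0%nat <> 0).
  { intros Hq0. destruct Hq as [[HN1 HN2] _]. unfold Phi in H0.
    destruct (XY_facts n 1 Hln q) as (E1 & E2 & P1 & P2). rewrite E1, E2 in H0. rewrite E2 in HN1.
    rewrite HX, Hq0 in H0, HN1. pose proof (sp_gt1 zeta Hz). nra. }
  assert (Hgen : forall p, chron n 1 eps zeta p q -> p 0%nat * q 0%nat < 0 -> False).
  { intros p [g [Hd [Hc [He [HN HT]]]]] Hpq.
    assert (Hneg : forall t, 0 <= t < 1 -> g 0%nat t <> 0).
    { intros t Ht Hg0.
      pose proof (Phi_curve_mono n 1 zeta Hz g Hd HT t 1 ltac:(lra) ltac:(lra) ltac:(lra)) as Hm.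
      rewrite (Phi_ext n 1 zeta (fun i => g i 1) q) in Hm by (intros; apply He; auto).
      pose proof (X_pos_of_Phi_neg n 1 zeta Hln Hz (fun i => g i t) ltac:(lra)) as HXp.
      rewrite HX in HXp. rewrite Hg0 in HXp. lra. }
    assert (Hcont : continuity (fun t => q 0%nat * g 0%nat t)).
    { apply cont_of_der. intros t. apply ex_derive_scal. apply Hd. lia. }
    destruct (He 0%nat ltac:(lia)) as [E0 E1].
    destruct (IVT (fun t => q 0%nat * g 0%nat t) 0 1 Hcont ltac:(lra)) as [z [Hz1 Hz2]].
    - rewrite E0. lra.
    - rewrite E1. nra.
    - destruct (Req_dec z 1) as [->|Hz3].
      + rewrite E1 in Hz2. nra.
      + apply (Hneg z); [lra|]. apply Rmult_integral in Hz2. destruct Hz2; auto. contradiction. }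
  destruct (Rlt_or_le 0 (q 0%nat)).
  - left. intros p [_ Hp] Hc. apply (Hgen p Hc). nra.
  - right. intros p [_ Hp] Hc. apply (Hgen p Hc). assert (q 0%nat < 0) by lra. nra.
Qed.


Lemma pos_of_ft n lam zeta z v : sqrt zeta * hdot n (vJ lam z) v > nrm n z * nrm n v -> 1 < zeta -> 0 < hdot n z z.
Proof.
  intros H Hz. destruct (Rle_lt_dec (hdot n z z) 0) as [Hle|]; auto.
  exfalso. assert (E0 : hdot n z z = 0) by (pose proof (hdot_pos n z); lra).
  assert (N0 : nrm n z = 0) by (unfold nrm; rewrite E0; apply sqrt_0).
  pose proof (CS_abs n (vJ lam z) v) as HC. rewrite nrm_J, N0 in HC.
  rewrite N0 in H. pose proof (Rabs_pos (hdot n (vJ lam z) v)).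
  assert (hdot n (vJ lam z) v = 0) by (apply Rabs_eq_0; lra).
  rewrite H1 in H. lra.
Qed.

Lemma nrm_lin2 n a b u v : 0 <= a -> 0 <= b -> nrm n (fun i => a * u i + b * v i) <= a * nrm n u + b * nrm n v.
Proof.
  intros Ha Hb. eapply Rle_trans. apply (nrm_tri n (fun i => a * u i) (fun i => b * v i)).
  rewrite !nrm_scal, !Rabs_right by lra. lra.
Qed.

Section KeyI.
Variables (n lam : nat) (zeta : R).
Hypothesis Hz : 1 < zeta.
Variables (p q : nat -> R).

Lemma key_i a b : 0 <= a -> 0 <= b ->
  sqrt zeta * hdot n (vJ lam (fun i => a * p i + b * q i)) (fun i => -(a+1) * p i + (b+1) * q i)
  - nrm n (fun i => a * p i + b * q i) * nrm n (fun i => -(a+1) * p i + (b+1) * q i)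
  >= a * a * Psi n lam zeta p + b * b * Phi n lam zeta q
     - (sqrt zeta + 1) * (a * nrm n p + b * nrm n q) * nrm n (fun i => 1 * q i + (-1) * p i).
Proof.
  intros Ha Hb.
  set (g := fun i => a * p i + b * q i).
  set (v0 := fun i => -a * p i + b * q i).
  set (e := fun i => 1 * q i + (-1) * p i).
  assert (Hv : (fun i => -(a+1) * p i + (b+1) * q i) = (fun i => v0 i + e i)).
  { apply functional_extensionality; intros i; unfold v0, e; ring. }
  rewrite Hv. rewrite hdot_addr.
  assert (HG0 : hdot n (vJ lam g) v0 = a * a * (- hdot n (vJ lam p) p) + b * b * hdot n (vJ lam q) q).
  { unfold g, v0. rewrite vJ_lin2. rewrite hdot_lin2l, !hdot_lin2r.
    rewrite (hdot_J_sym n lam q p), (hdot_sym n q (vJ lam p)). ring. }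
  assert (Hgg : hdot n g g = a*a*hdot n p p + 2*a*b*hdot n p q + b*b*hdot n q q).
  { unfold g. rewrite hdot_lin2l, !hdot_lin2r, (hdot_sym n q p). ring. }
  assert (Hvv : hdot n v0 v0 = a*a*hdot n p p - 2*a*b*hdot n p q + b*b*hdot n q q).
  { unfold v0. rewrite hdot_lin2l, !hdot_lin2r, (hdot_sym n q p). ring. }
  assert (Hpp := hdot_pos n p). assert (Hqq := hdot_pos n q).
  assert (HN0 : nrm n g * nrm n v0 <= a*a*hdot n p p + b*b*hdot n q q).
  { assert (Hprod : nrm n g * nrm n v0 * (nrm n g * nrm n v0) <= (a*a*hdot n p p + b*b*hdot n q q) * (a*a*hdot n p p + b*b*hdot n q q)).
    { replace (nrm n g * nrm n v0 * (nrm n g * nrm n v0)) with ((nrm n g * nrm n g) * (nrm n v0 * nrm n v0)) by ring.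
      rewrite !nrm_sq, Hgg, Hvv. nra. }
    pose proof (nrm_pos n g). pose proof (nrm_pos n v0).
    assert (0 <= a*a*hdot n p p + b*b*hdot n q q) by nra. nra. }
  assert (HE : Rabs (hdot n (vJ lam g) e) <= nrm n g * nrm n e).
  { rewrite <- (nrm_J n lam g). apply CS_abs. }
  assert (HT := nrm_tri n v0 e).
  assert (HgN : nrm n g <= a * nrm n p + b * nrm n q) by (apply nrm_lin2; auto).
  pose proof (nrm_pos n g) as P1. pose proof (nrm_pos n e) as P2. pose proof (nrm_pos n v0) as P3.
  pose proof (sp_gt1 zeta Hz) as S1. pose proof (Rle_abs (- hdot n (vJ lam g) e)) as A1. rewrite Rabs_Ropp in A1.
  unfold Psi, Phi.
  assert (Q1 : nrm n g * nrm n e <= (a * nrm n p + b * nrm n q) * nrm n e) by nra.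
  assert (Q2 : nrm n g * nrm n (fun i => v0 i + e i) <= nrm n g * nrm n v0 + nrm n g * nrm n e) by nra.
  assert (Q3 : sqrt zeta * hdot n (vJ lam g) e >= - (sqrt zeta * (nrm n g * nrm n e))) by nra.
  rewrite HG0. nra.
Qed.
End KeyI.


Lemma nrm_lt_eps n eps u : 0 < eps -> hdot n u u < eps * eps -> nrm n u < eps.
Proof.
  intros He H. unfold nrm. rewrite <- (sqrt_square eps) by lra. apply sqrt_lt_1_alt. split; auto. apply hdot_pos.
Qed.

Lemma hdot_lt_of_nrm n eps u : 0 < eps -> nrm n u < eps -> hdot n u u < eps * eps.
Proof. intros He H. rewrite <- nrm_sq. pose proof (nrm_pos n u). nra. Qed.

Lemma exp_ge1 x : 0 <= x -> 1 <= exp x.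
Proof. intros H. rewrite <- exp_0. destruct H. left; apply exp_increasing; auto. subst; lra. Qed.

Lemma scale_crit n lam zeta c d gv vv :
  0 < c -> 0 < d ->
  sqrt zeta * hdot n (vJ lam gv) vv - nrm n gv * nrm n vv > 0 ->
  sqrt zeta * hdot n (vJ lam (fun i => c * gv i)) (fun i => d * vv i) >
     nrm n (fun i => c * gv i) * nrm n (fun i => d * vv i).
Proof.
  intros Hc Hd H. rewrite vJ_scal, hdot_scall, hdot_scalr, !nrm_scal, !Rabs_right by lra.
  assert (0 < c * d) by nra.
  replace (sqrt zeta * (c * (d * hdot n (vJ lam gv) vv))) with ((c * d) * (sqrt zeta * hdot n (vJ lam gv) vv)) by ring.
  replace (c * nrm n gv * (d * nrm n vv)) with ((c * d) * (nrm n gv * nrm n vv)) by ring.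
  apply Rmult_lt_compat_l; lra.
Qed.

Section PartI.
Variables (n lam : nat) (eps zeta : R).
Hypothesis Hln : (lam <= n)%nat.
Hypothesis Hz : 1 < zeta.
Hypothesis Heps : 0 < eps.

Lemma part_i q p : inF n lam eps zeta q -> inP n lam eps zeta p -> chron n lam eps zeta p q.
Proof.
  intros Hq Hp.
  pose proof (inF_margin n lam eps zeta Hln Hz q Hq) as Mq.
  pose proof (inP_margin n lam eps zeta Hln Hz p Hp) as Mp.
  set (mp := Psi n lam zeta p) in *. set (mq := Phi n lam zeta q) in *.
  set (m := Rmin mp mq).
  assert (Hm : 0 < m) by (unfold m; apply Rmin_glb_lt; lra).
  assert (Hm1 : m <= mp) by apply Rmin_l. assert (Hm2 : m <= mq) by apply Rmin_r.
  set (np := nrm n p). set (nq := nrm n q). set (ne := nrm n (fun i => 1 * q i + (-1) * p i)).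
  assert (Hnp : 0 <= np) by apply nrm_pos. assert (Hnq : 0 <= nq) by apply nrm_pos.
  assert (Hne : 0 <= ne) by apply nrm_pos.
  pose proof (sp_gt1 zeta Hz) as S1.
  set (C := (sqrt zeta + 1) * (np + nq) * ne).
  assert (HC : 0 <= C) by (unfold C; apply Rmult_le_pos; [apply Rmult_le_pos|]; lra).
  set (E := (C / m + 1) * (C / m + 1) + 1).
  assert (HCm : 0 <= C / m) by (apply Rdiv_le_0_compat; lra).
  assert (HE1 : 1 < E) by (unfold E; nra).
  set (K := ln E).
  assert (HK : exp K = E) by (unfold K; apply exp_ln; lra).
  assert (HK0 : 0 < K) by (unfold K; rewrite <- ln_1; apply ln_increasing; lra).
  assert (HpN : np < eps) by (apply nrm_lt_eps; auto; destruct Hp as [[_ H] _]; lra).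
  assert (HqN : nq < eps) by (apply nrm_lt_eps; auto; destruct Hq as [[_ H] _]; lra).
  set (g := fun i t => (exp (K * (1 - t)) - 1) / (E - 1) * p i + (exp (K * t) - 1) / (E - 1) * q i).
  set (dg := fun i t => (- K * exp (K * (1 - t)) / (E - 1)) * p i + (K * exp (K * t) / (E - 1)) * q i).
  assert (Hcrit : forall t, 0 <= t <= 1 ->
     sqrt zeta * hdot n (vJ lam (fun i => g i t)) (fun i => dg i t) > nrm n (fun i => g i t) * nrm n (fun i => dg i t)
     /\ nrm n (fun i => g i t) < eps).
  { intros t Ht.
    set (U := exp (K * (1 - t))). set (T := exp (K * t)).
    assert (HU : 1 <= U) by (apply exp_ge1; nra). assert (HT : 1 <= T) by (apply exp_ge1; nra).
    assert (HUT : U * T = E) by (unfold U, T; rewrite <- exp_plus, <- HK; f_equal; ring).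
    set (a := U - 1). set (b := T - 1).
    assert (Eg : (fun i => g i t) = (fun i => (1 / (E - 1)) * (fun i => a * p i + b * q i) i)).
    { apply functional_extensionality; intros i. unfold g, a, b, U, T. field. lra. }
    assert (Ed : (fun i => dg i t) = (fun i => (K / (E - 1)) * (fun i => -(a+1) * p i + (b+1) * q i) i)).
    { apply functional_extensionality; intros i. unfold dg, a, b, U, T. field. lra. }
    rewrite Eg, Ed.
    assert (Ea : a = U - 1) by reflexivity. assert (Eb : b = T - 1) by reflexivity.
    assert (EE : E = (C / m + 1) * (C / m + 1) + 1) by reflexivity.
    assert (EC : C = (sqrt zeta + 1) * (np + nq) * ne) by reflexivity.
    assert (Enp : np = nrm n p) by reflexivity. assert (Enq : nq = nrm n q) by reflexivity.
    assert (Ene : ne = nrm n (fun i => 1 * q i + (-1) * p i)) by reflexivity.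
    assert (Emp : mp = Psi n lam zeta p) by reflexivity. assert (Emq : mq = Phi n lam zeta q) by reflexivity.
    clearbody mp mq m np nq ne C E K U T a b. clear g dg Eg Ed.
    assert (Ha : 0 <= a) by lra. assert (Hb : 0 <= b) by lra.
    assert (Hab : 2 * C / m < a + b).
    { assert (H1 : 4 * E <= (a + b + 2) * (a + b + 2)).
      { replace (a + b + 2) with (U + T) by lra. rewrite <- HUT. pose proof (Rle_0_sqr (U - T)) as Hsq. unfold Rsqr in Hsq. lra. }
      assert (H2 : 2 * (C / m + 1) < a + b + 2).
      { apply sq_lt_inv. lra. lra. nra. }
      unfold Rdiv in *. lra. }
    assert (Hab0 : 0 < a + b) by (assert (0 <= 2 * C / m) by (unfold Rdiv; apply Rmult_le_pos; [lra| apply Rlt_le, Rinv_0_lt_compat; lra]); lra).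
    split.
    - apply scale_crit. apply Rdiv_lt_0_compat; lra. apply Rdiv_lt_0_compat; lra.
      pose proof (key_i n lam zeta Hz p q a b Ha Hb) as HK1. rewrite <- Enp, <- Enq, <- Ene, <- Emp, <- Emq in HK1.
      assert (HC1 : (sqrt zeta + 1) * (a * np + b * nq) * ne <= C * (a + b)).
      { rewrite EC. assert (a * np + b * nq <= (a + b) * (np + nq)) by nra.
        assert (0 <= sqrt zeta + 1) by lra.
        replace ((sqrt zeta + 1) * (np + nq) * ne * (a + b)) with ((sqrt zeta + 1) * ((a + b) * (np + nq)) * ne) by ring.
        apply Rmult_le_compat_r; auto. apply Rmult_le_compat_l; auto. }
      assert (HC2 : m * (a + b) > 2 * C).
      { apply Rmult_lt_reg_r with (/ m). apply Rinv_0_lt_compat; lra.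
        replace (m * (a + b) * / m) with (a + b) by (field; lra). unfold Rdiv in Hab. lra. }
      assert (HC3a : m * (a * a) <= mp * (a * a)) by (apply Rmult_le_compat_r; [apply Rle_0_sqr|lra]).
      assert (HC3b : m * (b * b) <= mq * (b * b)) by (apply Rmult_le_compat_r; [apply Rle_0_sqr|lra]).
      assert (HC4 : 0 <= m * ((a - b) * (a - b))) by (apply Rmult_le_pos; [lra| apply Rle_0_sqr]).
      assert (HC5 : 2 * C * (a + b) < m * (a + b) * (a + b)) by (apply Rmult_lt_compat_r; lra).
      lra.
    - rewrite nrm_scal, Rabs_right by (apply Rle_ge, Rdiv_le_0_compat; lra).
      pose proof (nrm_lin2 n a b p q Ha Hb) as HL. rewrite <- Enp, <- Enq in HL.
      assert (a * np + b * nq < (a + b) * eps).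
      { assert (0 <= a * (eps - np)) by (apply Rmult_le_pos; lra).
        assert (0 <= b * (eps - nq)) by (apply Rmult_le_pos; lra).
        destruct (Rlt_or_le 0 a).
        - assert (0 < a * (eps - np)) by (apply Rmult_lt_0_compat; lra). lra.
        - assert (0 < b * (eps - nq)) by (apply Rmult_lt_0_compat; lra). lra. }
      assert (a + b <= E - 1).
      { assert (0 <= (U - 1) * (T - 1)) by (apply Rmult_le_pos; lra). lra. }
      assert (HE0 : 0 < 1 / (E - 1)) by (apply Rdiv_lt_0_compat; lra).
      apply Rle_lt_trans with (1 / (E - 1) * (a * np + b * nq)).
      { apply Rmult_le_compat_l; lra. }
      apply Rlt_le_trans with (1 / (E - 1) * ((a + b) * eps)).
      { apply Rmult_lt_compat_l; lra. }
      replace (1 / (E - 1) * ((a + b) * eps)) with (eps * ((a + b) / (E - 1))) by (field; lra).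
      rewrite <- (Rmult_1_r eps) at 2. apply Rmult_le_compat_l; [lra|].
      apply Rmult_le_reg_r with (E - 1); [lra|]. replace ((a + b) / (E - 1) * (E - 1)) with (a + b) by (field; lra). lra. }
  apply (chron_of n lam eps zeta p q g dg).
  - intros i t. unfold g, dg. auto_derive; [auto|]. unfold Rminus. field. lra.
  - intros i t. apply (ex_derive_continuous (K := R_AbsRing) (V := R_NormedModule)).
    unfold dg. auto_derive. auto.
  - intros i Hi. unfold g. split.
    + rewrite Rminus_0_r, Rmult_1_r, Rmult_0_r, exp_0, HK. field. lra.
    + rewrite Rminus_diag, Rmult_0_r, Rmult_1_r, exp_0, HK. field. lra.
  - intros t Ht. destruct (Hcrit t Ht) as [H1 H2]. split.
    + apply (pos_of_ft n lam zeta _ _ H1 Hz).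
    + replace (eps ^ 2) with (eps * eps) by ring. apply hdot_lt_of_nrm; auto.
  - intros t Ht. destruct (Hcrit t Ht) as [H1 H2]. apply ft_of; auto.
Qed.
End PartI.


Lemma locally_lt (t c : R) : t < c -> locally t (fun s => s < c).
Proof.
  intros H. assert (Hp : 0 < c - t) by lra. exists (mkposreal _ Hp). intros s Hs.
  unfold ball in Hs; simpl in Hs. unfold AbsRing_ball, abs, minus, plus, opp in Hs; simpl in Hs.
  apply Rabs_lt_between in Hs. lra.
Qed.

Lemma locally_gt (t c : R) : c < t -> locally t (fun s => c < s).
Proof.
  intros H. assert (Hp : 0 < t - c) by lra. exists (mkposreal _ Hp). intros s Hs.
  unfold ball in Hs; simpl in Hs. unfold AbsRing_ball, abs, minus, plus, opp in Hs; simpl in Hs.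
  apply Rabs_lt_between in Hs. lra.
Qed.

Lemma cont_pt_iff (f : R -> R) x : continuous f x <-> continuity_pt f x.
Proof. split; intros H; apply continuity_pt_filterlim; auto. Qed.

Section PW.
Variables (f g df dg : R -> R) (c : R).
Hypothesis Hf : forall t, is_derive f t (df t).
Hypothesis Hg : forall t, is_derive g t (dg t).
Hypothesis Hcf : forall t, continuous df t.
Hypothesis Hcg : forall t, continuous dg t.
Hypothesis Hfg : f c = g c.
Hypothesis Hdfg : df c = dg c.

Definition pwh t := if Rle_dec t c then f t else g t.
Definition pwdh t := if Rle_dec t c then df t else dg t.

Lemma pw_derive t : is_derive pwh t (pwdh t).
Proof.
  destruct (Rtotal_order t c) as [Hlt | [Heq | Hgt]].
  - apply is_derive_ext_loc with f.
    + eapply filter_imp; [|apply (locally_lt t c Hlt)]. intros s Hs. unfold pwh. destruct (Rle_dec s c); auto; lra.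
    + unfold pwdh. destruct (Rle_dec t c); [|lra]. auto.
  - subst t. apply is_derive_Reals. unfold pwdh. destruct (Rle_dec c c) as [_|]; [|lra].
    pose proof (proj1 (is_derive_Reals f c (df c)) (Hf c)) as Df.
    pose proof (proj1 (is_derive_Reals g c (dg c)) (Hg c)) as Dg.
    intros eps Heps. destruct (Df eps Heps) as [d1 Hd1]. destruct (Dg eps Heps) as [d2 Hd2].
    assert (Hd : 0 < Rmin d1 d2) by (apply Rmin_glb_lt; apply cond_pos).
    exists (mkposreal _ Hd). intros hh Hh Hhd. simpl in Hhd.
    unfold pwh. destruct (Rle_dec c c) as [_|]; [|lra].
    destruct (Rle_dec (c + hh) c).
    + apply Hd1; auto. pose proof (Rmin_l d1 d2); lra.
    + rewrite Hfg, Hdfg. apply Hd2; auto. pose proof (Rmin_r d1 d2); lra.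
  - apply is_derive_ext_loc with g.
    + eapply filter_imp; [|apply (locally_gt t c Hgt)]. intros s Hs. unfold pwh. destruct (Rle_dec s c); auto; lra.
    + unfold pwdh. destruct (Rle_dec t c); [lra|]. auto.
Qed.

Lemma pw_cont t : continuous pwdh t.
Proof.
  destruct (Rtotal_order t c) as [Hlt | [Heq | Hgt]].
  - apply continuous_ext_loc with df; auto.
    eapply filter_imp; [|apply (locally_lt t c Hlt)]. intros s Hs. unfold pwdh. destruct (Rle_dec s c); auto; lra.
  - subst t. apply cont_pt_iff.
    pose proof (proj1 (cont_pt_iff df c) (Hcf c)) as Cf.
    pose proof (proj1 (cont_pt_iff dg c) (Hcg c)) as Cg.
    intros eps Heps. destruct (Cf eps Heps) as [d1 [Hd1 H1]]. destruct (Cg eps Heps) as [d2 [Hd2 H2]].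
    exists (Rmin d1 d2). split; [apply Rmin_glb_lt; auto|].
    intros x [Hdx Hx]. unfold pwdh. destruct (Rle_dec c c) as [_|]; [|lra].
    simpl in Hx. unfold R_dist in Hx.
    destruct (Rle_dec x c).
    + apply H1. split; [exact Hdx|]. simpl; unfold R_dist. pose proof (Rmin_l d1 d2); lra.
    + rewrite Hdfg. apply H2. split; [exact Hdx|]. simpl; unfold R_dist. pose proof (Rmin_r d1 d2); lra.
  - apply continuous_ext_loc with dg; auto.
    eapply filter_imp; [|apply (locally_gt t c Hgt)]. intros s Hs. unfold pwdh. destruct (Rle_dec s c); auto; lra.
Qed.
End PW.

Lemma ft_scale n lam zeta z v c : 1 < zeta -> 0 < c -> fut_timelike n lam zeta z v ->
  fut_timelike n lam zeta z (fun i => c * v i).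
Proof.
  intros Hz Hc H. apply ft_to in H; auto. apply ft_of; auto.
  rewrite hdot_scalr, nrm_scal, Rabs_right by lra.
  replace (sqrt zeta * (c * hdot n (vJ lam z) v)) with (c * (sqrt zeta * hdot n (vJ lam z) v)) by ring.
  replace (nrm n z * (c * nrm n v)) with (c * (nrm n z * nrm n v)) by ring.
  apply Rmult_lt_compat_l; lra.
Qed.

Lemma lin_comp_derive (G dG : R -> R) s r t : (forall x, is_derive G x (dG x)) ->
  is_derive (fun t => G ((t - s) * r)) t (r * dG ((t - s) * r)).
Proof.
  intros H. apply is_derive_eq with (scal r (dG ((t - s) * r))).
  - apply (is_derive_comp G (fun t => (t - s) * r)). apply H.
    auto_derive; [auto| ring].
  - reflexivity.
Qed.

Lemma lin_comp_cont (D : R -> R) s r t : (forall x, continuous D x) ->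
  continuous (fun t => r * D ((t - s) * r)) t.
Proof.
  intros H. apply cont_pt_iff.
  apply continuity_pt_mult. apply continuity_pt_const. intros x y; auto.
  apply (continuity_pt_comp (fun t => (t - s) * r) D).
  - apply continuity_pt_mult. apply continuity_pt_minus. apply derivable_continuous_pt, derivable_pt_id.
    apply continuity_pt_const. intros x y; auto. apply continuity_pt_const. intros x y; auto.
  - apply cont_pt_iff. apply H.
Qed.

Section Glue.
Variables (n lam : nat) (eps zeta : R) (a b c : nat -> R).
Variables (g1 dg1 g2 dg2 : nat -> R -> R) (k : R).
Hypothesis Hz : 1 < zeta.
Hypothesis Hk : 0 < k.
Hypothesis D1 : forall i t, is_derive (g1 i) t (dg1 i t).
Hypothesis C1 : forall i t, continuous (dg1 i) t.
Hypothesis E1 : forall i, (i < n)%nat -> g1 i 0 = a i.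
Hypothesis N1 : forall t, 0 <= t <= 1 -> inN n eps (fun i => g1 i t).
Hypothesis T1 : forall t, 0 <= t <= 1 -> fut_timelike n lam zeta (fun i => g1 i t) (fun i => dg1 i t).
Hypothesis D2 : forall i t, is_derive (g2 i) t (dg2 i t).
Hypothesis C2 : forall i t, continuous (dg2 i) t.
Hypothesis E2 : forall i, (i < n)%nat -> g2 i 1 = c i.
Hypothesis N2 : forall t, 0 <= t <= 1 -> inN n eps (fun i => g2 i t).
Hypothesis T2 : forall t, 0 <= t <= 1 -> fut_timelike n lam zeta (fun i => g2 i t) (fun i => dg2 i t).
Hypothesis J0 : forall i, g1 i 1 = g2 i 0.
Hypothesis J1 : forall i, dg2 i 0 = k * dg1 i 1.

Lemma glue : chron n lam eps zeta a c.
Proof.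
  set (tau := 1 / (1 + k)).
  assert (Ht0 : 0 < tau) by (unfold tau; apply Rdiv_lt_0_compat; lra).
  assert (Ht1 : tau < 1) by (unfold tau; apply Rmult_lt_reg_r with (1 + k); [lra|]; field_simplify; lra).
  set (r1 := 1 / tau). set (r2 := 1 / (1 - tau)).
  assert (Hr1 : 0 < r1) by (unfold r1; apply Rdiv_lt_0_compat; lra).
  assert (Hr2 : 0 < r2) by (unfold r2; apply Rdiv_lt_0_compat; lra).
  set (h := fun i => pwh (fun t => g1 i ((t - 0) * r1)) (fun t => g2 i ((t - tau) * r2)) tau).
  set (dh := fun i => pwdh (fun t => r1 * dg1 i ((t - 0) * r1)) (fun t => r2 * dg2 i ((t - tau) * r2)) tau).
  assert (Hm1 : (tau - 0) * r1 = 1) by (unfold r1; field; lra).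
  assert (Hm2 : (tau - tau) * r2 = 0) by ring.
  apply (chron_of n lam eps zeta a c h dh).
  - intros i t. unfold h, dh. apply pw_derive.
    + intros; apply lin_comp_derive; auto.
    + intros; apply lin_comp_derive; auto.
    + rewrite Hm1, Hm2. auto.
    + rewrite Hm1, Hm2, J1. unfold r1, r2, tau. field. lra.
  - intros i t. unfold dh. apply pw_cont.
    + intros; apply lin_comp_cont; auto.
    + intros; apply lin_comp_cont; auto.
    + rewrite Hm1, Hm2, J1. unfold r1, r2, tau. field. lra.
  - intros i Hi. unfold h, pwh. split.
    + destruct (Rle_dec 0 tau); [|lra]. replace ((0 - 0) * r1) with 0 by ring. auto.
    + destruct (Rle_dec 1 tau); [lra|]. replace ((1 - tau) * r2) with 1 by (unfold r2; field; lra). auto.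
  - intros t Ht. unfold h, pwh. destruct (Rle_dec t tau).
    + apply N1. split. apply Rmult_le_pos; lra.
      replace 1 with ((tau - 0) * r1) by auto. apply Rmult_le_compat_r; lra.
    + apply N2. split. apply Rmult_le_pos; lra.
      replace 1 with ((1 - tau) * r2) by (unfold r2; field; lra). apply Rmult_le_compat_r; lra.
  - intros t Ht. unfold h, dh, pwh, pwdh. destruct (Rle_dec t tau).
    + apply ft_scale; auto. apply T1. split. apply Rmult_le_pos; lra.
      replace 1 with ((tau - 0) * r1) by auto. apply Rmult_le_compat_r; lra.
    + apply ft_scale; auto. apply T2. split. apply Rmult_le_pos; lra.
      replace 1 with ((1 - tau) * r2) by (unfold r2; field; lra). apply Rmult_le_compat_r; lra.
Qed.
End Glue.


Section Bez.
Variables (X0 u1q u2q : R).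
Hypothesis HX0 : 0 < X0.
Hypothesis Hu2q : 0 < u2q.

Definition bu1 t := (1 - t) * (1 - t) * (X0 * X0) + 2 * t * (1 - t) * (X0 * X0 / 2) + t * t * u1q.
Definition bu2 t := t * t * u2q.
Definition bdu1 t := 2 * (1 - t) * (X0 * X0 / 2 - X0 * X0) + 2 * t * (u1q - X0 * X0 / 2).
Definition bdu2 t := 2 * t * u2q.
Definition bS t := bu1 t * bu1 t + bu2 t * bu2 t.
Definition bnw t := sqrt (bS t).
Definition bA t := (bnw t + bu1 t) / 2.
Definition bX t := sqrt (bA t).
Definition bY t := bu2 t / (2 * bX t).

Lemma bu1_d t : is_derive bu1 t (bdu1 t).
Proof. unfold bu1, bdu1. auto_derive; auto. ring. Qed.
Lemma bu2_d t : is_derive bu2 t (bdu2 t).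
Proof. unfold bu2, bdu2. auto_derive; auto. ring. Qed.

Lemma bu1_0 : bu1 0 = X0 * X0.
Proof. unfold bu1; field. Qed.
Lemma bu2_0 : bu2 0 = 0.
Proof. unfold bu2; ring. Qed.

Lemma bS_pos t : 0 < bS t.
Proof.
  unfold bS. destruct (Req_dec t 0) as [->|Ht].
  - rewrite bu1_0, bu2_0. assert (HH : 0 < X0 * X0) by (apply Rmult_lt_0_compat; lra).
    assert (0 < X0 * X0 * (X0 * X0)) by (apply Rmult_lt_0_compat; lra). lra.
  - assert (HH : 0 < bu2 t) by (unfold bu2; apply Rmult_lt_0_compat; [assert (0 < t * t) by (apply Rsqr_pos_lt; auto); lra|auto]).
    assert (0 < bu2 t * bu2 t) by (apply Rmult_lt_0_compat; lra).
    pose proof (Rle_0_sqr (bu1 t)). unfold Rsqr in *. lra.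
Qed.

Lemma bA_pos t : 0 < bA t.
Proof.
  unfold bA, bnw. pose proof (bS_pos t) as HS. unfold bS in *.
  destruct (Req_dec t 0) as [->|Ht].
  - rewrite bu1_0, bu2_0 in *. pose proof (sqrt_pos (X0 * X0 * (X0 * X0) + 0 * 0)).
    assert (HH : 0 < X0 * X0) by (apply Rmult_lt_0_compat; lra). lra.
  - assert (HH : 0 < bu2 t) by (unfold bu2; apply Rmult_lt_0_compat; [assert (0 < t * t) by (apply Rsqr_pos_lt; auto); lra|auto]).
    assert (H2 : 0 < bu2 t * bu2 t) by (apply Rmult_lt_0_compat; lra).
    assert (Hlt : Rabs (bu1 t) < sqrt (bu1 t * bu1 t + bu2 t * bu2 t)).
    { rewrite <- sqrt_Rsqr_abs. apply sqrt_lt_1_alt. split. apply Rle_0_sqr. unfold Rsqr; lra. }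
    pose proof (Rle_abs (- bu1 t)) as Hab. rewrite Rabs_Ropp in Hab. lra.
Qed.

Lemma bX_pos t : 0 < bX t.
Proof. unfold bX. apply sqrt_lt_R0, bA_pos. Qed.

Lemma bnw_sq t : bnw t * bnw t = bu1 t * bu1 t + bu2 t * bu2 t.
Proof. unfold bnw. rewrite sqrt_sqrt; [auto|]. pose proof (bS_pos t). unfold bS in *. lra. Qed.

Lemma bX_sq t : bX t * bX t = (bnw t + bu1 t) / 2.
Proof. unfold bX. rewrite sqrt_sqrt; [auto|]. pose proof (bA_pos t). unfold bA in *. lra. Qed.

Lemma bY_sq t : bY t * bY t = (bnw t - bu1 t) / 2.
Proof.
  unfold bY. pose proof (bX_pos t). pose proof (bA_pos t). unfold bA in *.
  replace (bu2 t / (2 * bX t) * (bu2 t / (2 * bX t))) with (bu2 t * bu2 t / (4 * (bX t * bX t))) by (field; lra).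
  rewrite bX_sq. replace (bu2 t * bu2 t) with (bnw t * bnw t - bu1 t * bu1 t) by (rewrite bnw_sq; ring).
  field. lra.
Qed.

Lemma bXY t : 2 * bX t * bY t = bu2 t.
Proof. unfold bY. pose proof (bX_pos t). field. lra. Qed.

Lemma ex_sqrt y : 0 < y -> ex_derive sqrt y.
Proof. intros H. exists (/ (2 * sqrt y)). apply is_derive_Reals. apply derivable_pt_lim_sqrt. auto. Qed.

Lemma bu1_ex t : ex_derive bu1 t.
Proof. exists (bdu1 t). apply bu1_d. Qed.
Lemma bu2_ex t : ex_derive bu2 t.
Proof. exists (bdu2 t). apply bu2_d. Qed.

Lemma bnw_ex t : ex_derive bnw t.
Proof.
  unfold bnw. apply (ex_derive_comp sqrt bS).
  - apply ex_sqrt, bS_pos.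
  - unfold bS. auto_derive. repeat split; try apply bu1_ex; try apply bu2_ex.
Qed.

Lemma bX_ex t : ex_derive bX t.
Proof.
  unfold bX. apply (ex_derive_comp sqrt bA).
  - apply ex_sqrt, bA_pos.
  - unfold bA. auto_derive. repeat split; try apply bnw_ex; try apply bu1_ex.
Qed.

Lemma bY_ex t : ex_derive bY t.
Proof.
  unfold bY. auto_derive. pose proof (bX_pos t). repeat split; try apply bX_ex; try apply bu2_ex. lra.
Qed.

Lemma bu1_eq (s : R) : bu1 s = bX s * bX s - bY s * bY s.
Proof. rewrite bX_sq, bY_sq. field. Qed.
Lemma bu2_eq (s : R) : bu2 s = 2 * bX s * bY s.
Proof. rewrite bXY. auto. Qed.

Lemma bX_der t : Derive bX t = (bX t * bdu1 t + bY t * bdu2 t) / (2 * bnw t)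
  /\ Derive bY t = (bX t * bdu2 t - bY t * bdu1 t) / (2 * bnw t).
Proof.
  set (DX := Derive bX t). set (DY := Derive bY t).
  assert (H1 : 2 * bX t * DX - 2 * bY t * DY = bdu1 t).
  { assert (Hd : is_derive (fun s => bX s * bX s - bY s * bY s) t (2 * bX t * DX - 2 * bY t * DY)).
    { auto_derive; [repeat split; try apply bX_ex; try apply bY_ex|].
      change (fun x => bX x) with bX. change (fun x => bY x) with bY. unfold DX, DY. ring. }
    assert (Hd2 : is_derive (fun s => bX s * bX s - bY s * bY s) t (bdu1 t)).
    { apply is_derive_ext with bu1. intros s. apply bu1_eq. apply bu1_d. }
    rewrite <- (is_derive_unique _ _ _ Hd), <- (is_derive_unique _ _ _ Hd2). auto. }
  assert (H2 : 2 * (DX * bY t + bX t * DY) = bdu2 t).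
  { assert (Hd : is_derive (fun s => 2 * bX s * bY s) t (2 * (DX * bY t + bX t * DY))).
    { auto_derive; [repeat split; try apply bX_ex; try apply bY_ex|].
      change (fun x => bX x) with bX. change (fun x => bY x) with bY. unfold DX, DY. ring. }
    assert (Hd2 : is_derive (fun s => 2 * bX s * bY s) t (bdu2 t)).
    { apply is_derive_ext with bu2. intros s. apply bu2_eq. apply bu2_d. }
    rewrite <- (is_derive_unique _ _ _ Hd), <- (is_derive_unique _ _ _ Hd2). auto. }
  assert (Hn : bX t * bX t + bY t * bY t = bnw t) by (rewrite bX_sq, bY_sq; field).
  assert (Hnp : 0 < bnw t) by (pose proof (bX_pos t); nra).
  split.
  - apply Rmult_eq_reg_r with (2 * bnw t); [|lra].
    field_simplify; [|lra]. rewrite <- Hn. nra.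
  - apply Rmult_eq_reg_r with (2 * bnw t); [|lra].
    field_simplify; [|lra]. rewrite <- Hn. nra.
Qed.
End Bez.

Lemma bX0 X0 u1q u2q : 0 < X0 -> bX X0 u1q u2q 0 = X0 /\ bY X0 u1q u2q 0 = 0.
Proof.
  intros H. assert (Hn : bnw X0 u1q u2q 0 = X0 * X0).
  { unfold bnw, bS. rewrite bu1_0, bu2_0. replace (X0 * X0 * (X0 * X0) + 0 * 0) with ((X0 * X0) * (X0 * X0)) by ring.
    apply sqrt_square. nra. }
  assert (HX : bX X0 u1q u2q 0 = X0).
  { unfold bX, bA. rewrite Hn, bu1_0. replace ((X0 * X0 + X0 * X0) / 2) with (X0 * X0) by field. apply sqrt_square; lra. }
  split; auto. unfold bY. rewrite bu2_0, HX. field. lra.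
Qed.

Lemma bX1 X0 u1q u2q rX rY : 0 < rX -> 0 < rY -> u1q = rX * rX - rY * rY -> u2q = 2 * rX * rY ->
  bX X0 u1q u2q 1 = rX /\ bY X0 u1q u2q 1 = rY.
Proof.
  intros H1 H2 E1 E2.
  assert (Hu1 : bu1 X0 u1q 1 = u1q) by (unfold bu1; ring).
  assert (Hu2 : bu2 u2q 1 = u2q) by (unfold bu2; ring).
  assert (Hn : bnw X0 u1q u2q 1 = rX * rX + rY * rY).
  { unfold bnw, bS. rewrite Hu1, Hu2, E1, E2.
    replace ((rX * rX - rY * rY) * (rX * rX - rY * rY) + 2 * rX * rY * (2 * rX * rY)) with
      ((rX * rX + rY * rY) * (rX * rX + rY * rY)) by ring. apply sqrt_square. nra. }
  assert (HX : bX X0 u1q u2q 1 = rX).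
  { unfold bX, bA. rewrite Hn, Hu1, E1. replace ((rX * rX + rY * rY + (rX * rX - rY * rY)) / 2) with (rX * rX) by field.
    apply sqrt_square; lra. }
  split; auto. unfold bY. rewrite Hu2, HX, E2. field. lra.
Qed.


Section Piece2.
Variables (n lam : nat) (eps zeta : R) (q : nat -> R) (X0 : R).
Hypothesis Hln : (lam <= n)%nat.
Hypothesis Hz : 1 < zeta.
Hypothesis Hq : inbdF n lam eps zeta q.
Hypothesis HX0 : 0 < X0.
Hypothesis HX0e : X0 < eps.
Hypothesis Heps : 0 < eps.

Definition Xq := hdot n (xp lam q) (xp lam q).
Definition Yq := hdot n (yp lam q) (yp lam q).
Definition rq := sqrt Xq.
Definition sq := sqrt Yq.
Definition u1q := Xq - Yq.
Definition u2q := 2 * rq * sq.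

Lemma q_facts : 0 < Xq /\ 0 < Yq /\ (sqrt zeta - 1) * Yq = (sqrt zeta + 1) * Xq /\ Xq + Yq < eps * eps.
Proof.
  pose proof (bdF_eq n lam eps zeta Hln Hz q Hq) as H0. destruct Hq as [[HN1 HN2] _].
  unfold Phi in H0. destruct (XY_facts n lam Hln q) as (E1 & E2 & P1 & P2).
  rewrite E1, E2 in H0. rewrite E2 in HN1, HN2. fold Xq Yq in *. pose proof (sp_gt1 zeta Hz).
  assert (HE : (sqrt zeta - 1) * Yq = (sqrt zeta + 1) * Xq) by lra.
  assert (0 < Xq).
  { destruct P1 as [|HX]; auto. rewrite <- HX in HE. assert (Yq = 0) by nra. lra. }
  repeat split; auto; [nra| simpl in HN2; lra].
Qed.

Lemma rq_pos : 0 < rq.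
Proof. unfold rq. apply sqrt_lt_R0. apply q_facts. Qed.
Lemma sq_pos : 0 < sq.
Proof. unfold sq. apply sqrt_lt_R0. apply q_facts. Qed.
Lemma rq_sq : rq * rq = Xq.
Proof. unfold rq. apply sqrt_sqrt. pose proof q_facts; lra. Qed.
Lemma sq_sq : sq * sq = Yq.
Proof. unfold sq. apply sqrt_sqrt. pose proof q_facts; lra. Qed.
Lemma u2q_pos : 0 < u2q.
Proof. unfold u2q. pose proof rq_pos; pose proof sq_pos. nra. Qed.

Definition g2 i t := (bX X0 u1q u2q t / rq) * xp lam q i + (bY X0 u1q u2q t / sq) * yp lam q i.
Definition DX2 t := (bX X0 u1q u2q t * bdu1 X0 u1q t + bY X0 u1q u2q t * bdu2 u2q t) / (2 * bnw X0 u1q u2q t).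
Definition DY2 t := (bX X0 u1q u2q t * bdu2 u2q t - bY X0 u1q u2q t * bdu1 X0 u1q t) / (2 * bnw X0 u1q u2q t).
Definition dg2 i t := (DX2 t / rq) * xp lam q i + (DY2 t / sq) * yp lam q i.

Lemma g2_derive i t : is_derive (g2 i) t (dg2 i t).
Proof.
  pose proof rq_pos; pose proof sq_pos. pose proof u2q_pos.
  unfold g2. auto_derive.
  - repeat split; [apply bX_ex|apply bY_ex]; auto.
  - change (fun x => bX X0 u1q u2q x) with (bX X0 u1q u2q). change (fun x => bY X0 u1q u2q x) with (bY X0 u1q u2q).
    destruct (bX_der X0 u1q u2q HX0 H1 t) as [E1 E2]. rewrite E1, E2. unfold dg2, DX2, DY2. field.
    split; [|lra]. pose proof (bX_pos X0 u1q u2q HX0 H1 t). pose proof (bnw_sq X0 u1q u2q HX0 H1 t).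
    intros Hn. rewrite Hn in H3. pose proof (bS_pos X0 u1q u2q HX0 H1 t). unfold bS in H4. lra.
Qed.

Lemma bnw_pos t : 0 < bnw X0 u1q u2q t.
Proof. unfold bnw. apply sqrt_lt_R0. apply bS_pos; auto. apply u2q_pos. Qed.

Lemma dg2_cont i t : continuous (dg2 i) t.
Proof.
  pose proof rq_pos; pose proof sq_pos. pose proof u2q_pos.
  apply (ex_derive_continuous (K := R_AbsRing) (V := R_NormedModule)).
  assert (Hb1 : forall s, ex_derive (bdu1 X0 u1q) s) by (intros s; unfold bdu1; auto_derive; auto).
  assert (Hb2 : forall s, ex_derive (bdu2 u2q) s) by (intros s; unfold bdu2; auto_derive; auto).
  assert (HX : ex_derive (bX X0 u1q u2q) t) by (apply bX_ex; auto).
  assert (HY : ex_derive (bY X0 u1q u2q) t) by (apply bY_ex; auto).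
  assert (HN : ex_derive (bnw X0 u1q u2q) t) by (apply bnw_ex; auto).
  pose proof (bnw_pos t).
  assert (HDX : ex_derive DX2 t).
  { unfold DX2. auto_derive. split; [exact HX|]. split; [apply Hb1|]. split; [exact HY|].
    split; [apply Hb2|]. split; [exact HN|]. split; [lra|exact I]. }
  assert (HDY : ex_derive DY2 t).
  { unfold DY2. auto_derive. split; [exact HX|]. split; [apply Hb2|]. split; [exact HY|].
    split; [apply Hb1|]. split; [exact HN|]. split; [lra|exact I]. }
  unfold dg2. auto_derive. split; [exact HDX|]. split; [exact HDY|exact I].
Qed.

Lemma g2_start i : g2 i 0 = (X0 / rq) * xp lam q i /\ dg2 i 0 = (- X0 / (2 * rq)) * xp lam q i.
Proof.
  pose proof rq_pos; pose proof sq_pos. pose proof u2q_pos.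
  destruct (bX0 X0 u1q u2q HX0) as [E1 E2].
  assert (Hn : bnw X0 u1q u2q 0 = X0 * X0).
  { unfold bnw, bS. rewrite bu1_0, bu2_0. replace (X0 * X0 * (X0 * X0) + 0 * 0) with ((X0 * X0) * (X0 * X0)) by ring.
    apply sqrt_square. nra. }
  unfold g2, dg2, DX2, DY2. rewrite E1, E2, Hn. unfold bdu1, bdu2. split; field; lra.
Qed.

Lemma g2_end i : (i < n)%nat -> g2 i 1 = q i.
Proof.
  intros Hi. pose proof rq_pos; pose proof sq_pos.
  destruct (bX1 X0 u1q u2q rq sq H H0) as [E1 E2].
  - unfold u1q. rewrite rq_sq, sq_sq. auto.
  - auto.
  - unfold g2. rewrite E1, E2. rewrite (xp_yp lam q i). field. lra.
Qed.

Lemma gram2 a b c d : hdot n (fun i => a * xp lam q i + b * yp lam q i) (fun i => c * xp lam q i + d * yp lam q i)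
  = a * c * Xq + b * d * Yq.
Proof.
  rewrite hdot_lin2l, !hdot_lin2r. rewrite (hdot_xy n lam), (hdot_yx n lam). unfold Xq, Yq. ring.
Qed.

Lemma vJ2 a b : vJ lam (fun i => a * xp lam q i + b * yp lam q i) = (fun i => (-a) * xp lam q i + b * yp lam q i).
Proof.
  rewrite vJ_lin2, (vJ_xp lam), (vJ_yp lam). apply functional_extensionality; intros i; ring.
Qed.

Lemma du1_eq t : bdu1 X0 u1q t = - (X0 * X0) + 2 * t * u1q.
Proof. unfold bdu1. field. Qed.

Lemma g2_N t : 0 <= t <= 1 -> inN n eps (fun i => g2 i t).
Proof.
  intros Ht. pose proof rq_pos as H1; pose proof sq_pos as H2; pose proof u2q_pos as H3.
  pose proof q_facts as (F1 & F2 & F3 & F4).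
  unfold g2. unfold inN. rewrite gram2.
  assert (Hnn0 : bX X0 u1q u2q t * bX X0 u1q u2q t + bY X0 u1q u2q t * bY X0 u1q u2q t = bnw X0 u1q u2q t)
    by (rewrite bX_sq, bY_sq by auto; field).
  assert (Hs : bX X0 u1q u2q t / rq * (bX X0 u1q u2q t / rq) * Xq + bY X0 u1q u2q t / sq * (bY X0 u1q u2q t / sq) * Yq
     = bnw X0 u1q u2q t).
  { rewrite <- rq_sq, <- sq_sq. rewrite <- Hnn0. field. lra. }
  rewrite Hs. split; [apply bnw_pos|].
  set (W := Xq + Yq).
  assert (Hb : bnw X0 u1q u2q t <= (1 - t) * (X0 * X0) + t * t * W).
  { unfold bnw, bS. apply sqrt_le_of_sq.
    - assert (0 <= (1 - t) * (X0 * X0)) by (apply Rmult_le_pos; nra). assert (0 <= t * t * W) by (unfold W; nra). lra.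
    - assert (E1 : bu1 X0 u1q t = (1 - t) * (X0 * X0) + t * t * u1q) by (unfold bu1; field).
      assert (E2 : bu2 u2q t = t * t * u2q) by (unfold bu2; ring).
      assert (E3 : u2q * u2q = 4 * Xq * Yq) by (unfold u2q; rewrite <- rq_sq, <- sq_sq; ring).
      rewrite E1, E2. unfold u1q in *. unfold W.
      assert (0 <= (1 - t) * (X0 * X0) * (t * t) * Yq) by (repeat apply Rmult_le_pos; nra).
      assert (Hk : ((1 - t) * (X0 * X0) + t * t * (Xq + Yq)) * ((1 - t) * (X0 * X0) + t * t * (Xq + Yq)) -
        (((1 - t) * (X0 * X0) + t * t * (Xq - Yq)) * ((1 - t) * (X0 * X0) + t * t * (Xq - Yq)) + t * t * u2q * (t * t * u2q))
        = 4 * ((1 - t) * (X0 * X0) * (t * t) * Yq) + (t * t) * (t * t) * (4 * Xq * Yq - u2q * u2q)) by ring.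
      rewrite E3 in Hk. lra. }
  assert (HW : W < eps * eps) by (unfold W; lra).
  assert (HX2 : X0 * X0 < eps * eps) by nra.
  replace (eps ^ 2) with (eps * eps) by ring.
  assert (t * t * W <= t * W).
  { assert (0 <= t * (1 - t) * W) by (repeat apply Rmult_le_pos; unfold W; lra). lra. }
  assert ((1 - t) * (X0 * X0) + t * W < eps * eps).
  { destruct (Rlt_or_le 0 t).
    - assert (t * W < t * (eps * eps)) by (apply Rmult_lt_compat_l; lra).
      assert ((1 - t) * (X0 * X0) <= (1 - t) * (eps * eps)) by (apply Rmult_le_compat_l; lra). lra.
    - assert (t = 0) by lra. subst t. lra. }
  lra.
Qed.

Lemma g2_T t : 0 <= t <= 1 -> fut_timelike n lam zeta (fun i => g2 i t) (fun i => dg2 i t).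
Proof.
  intros Ht. pose proof rq_pos as H1; pose proof sq_pos as H2; pose proof u2q_pos as H3.
  pose proof q_facts as (F1 & F2 & F3 & F4).
  pose proof (bnw_pos t) as Hn.
  pose proof (bX_pos X0 u1q u2q HX0 H3 t) as HXp.
  assert (Hnn : bX X0 u1q u2q t * bX X0 u1q u2q t + bY X0 u1q u2q t * bY X0 u1q u2q t = bnw X0 u1q u2q t)
    by (rewrite bX_sq, bY_sq by auto; field).
  set (x := bX X0 u1q u2q t) in *. set (y := bY X0 u1q u2q t) in *. set (w := bnw X0 u1q u2q t) in *.
  set (d1 := bdu1 X0 u1q t). set (d2 := bdu2 u2q t).
  apply ft_of; auto. unfold g2, dg2. rewrite vJ2. fold x y. rewrite gram2.
  unfold nrm. rewrite !gram2.
  unfold DX2, DY2. fold x y w d1 d2.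
  assert (HG : - (x / rq) * (((x * d1 + y * d2) / (2 * w)) / rq) * Xq + y / sq * (((x * d2 - y * d1) / (2 * w)) / sq) * Yq
     = - d1 / 2).
  { rewrite <- rq_sq, <- sq_sq.
    transitivity (- (x * x + y * y) * d1 / (2 * w)). field. split; [lra|split; lra].
    rewrite Hnn. field. lra. }
  assert (HZ : x / rq * (x / rq) * Xq + y / sq * (y / sq) * Yq = w).
  { rewrite <- rq_sq, <- sq_sq. rewrite <- Hnn. field. lra. }
  assert (HV : (x * d1 + y * d2) / (2 * w) / rq * ((x * d1 + y * d2) / (2 * w) / rq) * Xq +
               (x * d2 - y * d1) / (2 * w) / sq * ((x * d2 - y * d1) / (2 * w) / sq) * Yq = (d1 * d1 + d2 * d2) / (4 * w)).
  { rewrite <- rq_sq, <- sq_sq.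
    transitivity ((x * x + y * y) * (d1 * d1 + d2 * d2) / (4 * (w * w))). field. split; [lra|split; lra].
    rewrite Hnn. field. lra. }
  rewrite HG, HZ, HV.
  assert (Hd1 : d1 = - (X0 * X0) + 2 * t * (Xq - Yq)) by (unfold d1; rewrite du1_eq; auto).
  assert (Hd2 : d2 = 2 * t * u2q) by (unfold d2, bdu2; ring).
  assert (HXY : Xq < Yq) by (pose proof (sp_gt1 zeta Hz); nra).
  assert (Hd1n : d1 < 0) by (rewrite Hd1; nra).
  assert (Hid : (zeta - 1) * ((Yq - Xq) * (Yq - Xq)) = 4 * Xq * Yq).
  { pose proof (sp_sq zeta Hz) as S2. pose proof (sp_gt1 zeta Hz).
    assert (A1 : (sqrt zeta - 1) * (Yq - Xq) = 2 * Xq) by lra.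
    assert (A2 : (sqrt zeta + 1) * (Yq - Xq) = 2 * Yq) by lra.
    replace (zeta - 1) with ((sqrt zeta - 1) * (sqrt zeta + 1)) by nra.
    replace (4 * Xq * Yq) with ((2 * Xq) * (2 * Yq)) by ring. rewrite <- A1, <- A2. ring. }
  assert (E3 : u2q * u2q = 4 * Xq * Yq) by (unfold u2q; rewrite <- rq_sq, <- sq_sq; ring).
  assert (Hkey : d1 * d1 + d2 * d2 < zeta * (d1 * d1)).
  { rewrite Hd1, Hd2. 
    assert (0 < (zeta - 1) * (X0 * X0 * (X0 * X0) + 4 * t * (X0 * X0) * (Yq - Xq))).
    { apply Rmult_lt_0_compat; [lra|]. assert (0 < X0 * X0 * (X0 * X0)) by (assert (0 < X0 * X0) by nra; nra).
      assert (0 <= 4 * t * (X0 * X0) * (Yq - Xq)) by (repeat apply Rmult_le_pos; nra). lra. }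
    replace ((2 * t * u2q) * (2 * t * u2q)) with (4 * (t * t) * (u2q * u2q)) by ring. rewrite E3.
    replace (zeta * ((- (X0 * X0) + 2 * t * (Xq - Yq)) * (- (X0 * X0) + 2 * t * (Xq - Yq))))
      with ((- (X0 * X0) + 2 * t * (Xq - Yq)) * (- (X0 * X0) + 2 * t * (Xq - Yq)) +
            (zeta - 1) * (X0 * X0 * (X0 * X0) + 4 * t * (X0 * X0) * (Yq - Xq)) + 4 * (t * t) * ((zeta - 1) * ((Yq - Xq) * (Yq - Xq)))) by ring.
    rewrite Hid. lra. }
  pose proof (sp_gt1 zeta Hz). pose proof (sp_sq zeta Hz).
  assert (HG0 : 0 < sqrt zeta * (- d1 / 2)) by (apply Rmult_lt_0_compat; lra).
  apply sq_lt_inv. apply Rmult_le_pos; apply sqrt_pos. lra.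
  assert (HPos : 0 <= (d1 * d1 + d2 * d2) / (4 * w)) by (apply Rdiv_le_0_compat; nra).
  replace (sqrt w * sqrt ((d1 * d1 + d2 * d2) / (4 * w)) * (sqrt w * sqrt ((d1 * d1 + d2 * d2) / (4 * w))))
    with ((sqrt w * sqrt w) * (sqrt ((d1 * d1 + d2 * d2) / (4 * w)) * sqrt ((d1 * d1 + d2 * d2) / (4 * w)))) by ring.
  rewrite !sqrt_sqrt by lra.
  replace (w * ((d1 * d1 + d2 * d2) / (4 * w))) with ((d1 * d1 + d2 * d2) / 4) by (field; lra).
  replace (sqrt zeta * (- d1 / 2) * (sqrt zeta * (- d1 / 2))) with ((sqrt zeta * sqrt zeta) * (d1 * d1) / 4) by field.
  rewrite H0. lra.
Qed.

End Piece2.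


Definition isx (lam : nat) (v : nat -> R) := forall i, (lam <= i)%nat -> v i = 0.

Lemma sumR_two k F : (2 <= k)%nat -> (forall i, (2 <= i)%nat -> F i = 0) -> sumR k F = F 0%nat + F 1%nat.
Proof.
  intros Hk HF. induction k as [|k IH]; [lia|].
  destruct (Nat.eq_dec k 1) as [->|Hk1].
  - simpl. ring.
  - simpl. rewrite IH by lia. rewrite (HF k) by lia. ring.
Qed.

Section Rot.
Variables (n lam : nat).
Hypothesis Hln : (lam <= n)%nat.
Hypothesis Hl2 : (2 <= lam)%nat.
Variables (A Q : nat -> R).
Hypothesis HAx : isx lam A.
Hypothesis HQx : isx lam Q.
Hypothesis HA : 0 < hdot n A A.
Hypothesis HQ : 0 < hdot n Q Q.

Lemma perp_exists : exists Ep, isx lam Ep /\ hdot n A Ep = 0 /\ 0 < hdot n Ep Ep.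
Proof.
  destruct (Req_dec (A 0%nat) 0) as [H0|H0]; [destruct (Req_dec (A 1%nat) 0) as [H1|H1]|].
  - exists (fun i => if Nat.eqb i 0 then 1 else 0). split; [|split].
    + intros i Hi. destruct (Nat.eqb_spec i 0); [lia|auto].
    + unfold hdot. rewrite sumR_two. simpl. rewrite H0, H1. ring. lia. intros i Hi; destruct (Nat.eqb_spec i 0); [lia|ring].
    + unfold hdot. rewrite sumR_two. simpl. lra. lia. intros i Hi; destruct (Nat.eqb_spec i 0); [lia|ring].
  - exists (fun i => if Nat.eqb i 0 then A 1%nat else if Nat.eqb i 1 then - A 0%nat else 0). split; [|split].
    + intros i Hi. destruct (Nat.eqb_spec i 0); [lia|]. destruct (Nat.eqb_spec i 1); [lia|auto].
    + unfold hdot. rewrite sumR_two. simpl. ring. lia. intros i Hi. destruct (Nat.eqb_spec i 0); [lia|]. destruct (Nat.eqb_spec i 1); [lia|ring].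
    + unfold hdot. rewrite sumR_two. simpl. nra. lia. intros i Hi. destruct (Nat.eqb_spec i 0); [lia|]. destruct (Nat.eqb_spec i 1); [lia|ring].
  - exists (fun i => if Nat.eqb i 0 then A 1%nat else if Nat.eqb i 1 then - A 0%nat else 0). split; [|split].
    + intros i Hi. destruct (Nat.eqb_spec i 0); [lia|]. destruct (Nat.eqb_spec i 1); [lia|auto].
    + unfold hdot. rewrite sumR_two. simpl. ring. lia. intros i Hi. destruct (Nat.eqb_spec i 0); [lia|]. destruct (Nat.eqb_spec i 1); [lia|ring].
    + unfold hdot. rewrite sumR_two. simpl. nra. lia. intros i Hi. destruct (Nat.eqb_spec i 0); [lia|]. destruct (Nat.eqb_spec i 1); [lia|ring].
Qed.

Lemma rot_exists : exists B Th, isx lam B /\ hdot n A B = 0 /\ hdot n B B = hdot n A A /\ 0 <= Th <= PI /\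
  forall i, cos Th * A i + sin Th * B i = (nrm n A / nrm n Q) * Q i.
Proof.
  set (rA := nrm n A). set (rQ := nrm n Q).
  assert (HrA : 0 < rA) by (unfold rA, nrm; apply sqrt_lt_R0; auto).
  assert (HrQ : 0 < rQ) by (unfold rQ, nrm; apply sqrt_lt_R0; auto).
  assert (ErA : rA * rA = hdot n A A) by apply nrm_sq.
  assert (ErQ : rQ * rQ = hdot n Q Q) by apply nrm_sq.
  set (c := hdot n A Q / (rA * rQ)).
  assert (Hc : -1 <= c <= 1).
  { pose proof (CS_abs n A Q) as HC. fold rA rQ in HC. unfold c.
    apply Rabs_le_between. rewrite Rabs_div by nra. rewrite (Rabs_right (rA * rQ)) by nra.
    apply Rmult_le_reg_r with (rA * rQ); [nra|]. unfold Rdiv. rewrite Rmult_assoc, Rinv_l by nra. lra. }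
  set (D := fun i => (rA / rQ) * Q i + (- c) * A i).
  assert (HDx : isx lam D) by (intros i Hi; unfold D; rewrite HAx, HQx by auto; ring).
  assert (HAQ : hdot n A Q = c * (rA * rQ)) by (unfold c; field; nra).
  assert (HAD : hdot n A D = 0).
  { unfold D. rewrite hdot_lin2r. rewrite HAQ, <- ErA. field. lra. }
  assert (HDD : hdot n D D = rA * rA * (1 - c * c)).
  { unfold D. rewrite hdot_lin2l, !hdot_lin2r. rewrite (hdot_sym n Q A), HAQ, <- ErA, <- ErQ. field. lra. }
  assert (Hcos : cos (acos c) = c) by (apply cos_acos; auto).
  assert (Hsin : sin (acos c) = sqrt (1 - c * c)) by (rewrite sin_acos by auto; reflexivity).
  pose proof (acos_bound c) as Hb.
  destruct (Rlt_or_le (c * c) 1) as [Hlt|Hge].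
  - set (s := sqrt (1 - c * c)).
    assert (Hs : 0 < s) by (unfold s; apply sqrt_lt_R0; lra).
    assert (Hs2 : s * s = 1 - c * c) by (unfold s; apply sqrt_sqrt; lra).
    exists (fun i => (1 / s) * D i), (acos c). split; [|split; [|split; [|split]]].
    + intros i Hi. rewrite HDx by auto. ring.
    + rewrite hdot_scalr, HAD. ring.
    + rewrite hdot_scall, hdot_scalr, HDD, <- ErA. rewrite <- Hs2. field. lra.
    + auto.
    + intros i. rewrite Hcos, Hsin. fold s. unfold D. field. lra.
  - assert (Hc1 : c * c = 1) by nra.
    assert (HD0 : forall i, D i = 0).
    { intros i. destruct (Nat.lt_ge_cases i n) as [Hi|Hi].
      - assert (Hz : hdot n D D = 0) by (rewrite HDD, Hc1; ring).
        pose proof (sumR_zero_sq n (fun i => D i * D i) ltac:(intros; nra) Hz i Hi). nra.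
      - apply HDx. lia. }
    destruct perp_exists as [Ep [HEx [HAE HEE]]].
    set (rE := nrm n Ep).
    assert (HrE : 0 < rE) by (unfold rE, nrm; apply sqrt_lt_R0; auto).
    assert (ErE : rE * rE = hdot n Ep Ep) by apply nrm_sq.
    exists (fun i => (rA / rE) * Ep i), (acos c). split; [|split; [|split; [|split]]].
    + intros i Hi. rewrite HEx by auto. ring.
    + rewrite hdot_scalr, HAE. ring.
    + rewrite hdot_scall, hdot_scalr, <- ErE, <- ErA. field. lra.
    + auto.
    + intros i. rewrite Hcos, Hsin, Hc1. rewrite Rminus_diag, sqrt_0.
      pose proof (HD0 i) as Hi. unfold D in Hi. lra.
Qed.
End Rot.


Lemma hdot_lin3l n a b c u v w z : hdot n (fun i => a * u i + b * v i + c * w i) z = a * hdot n u z + b * hdot n v z + c * hdot n w z.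
Proof.
  unfold hdot. rewrite <- !sumR_scal, <- !sumR_plus. apply sumR_ext; intros; ring.
Qed.
Lemma hdot_lin3r n a b c u v w z : hdot n z (fun i => a * u i + b * v i + c * w i) = a * hdot n z u + b * hdot n z v + c * hdot n z w.
Proof. rewrite hdot_sym, hdot_lin3l, !(hdot_sym n z). auto. Qed.

Lemma shrink_lemma n lam zeta z e K : 1 < zeta -> 0 <= K ->
  sqrt zeta * hdot n (vJ lam z) (fun i => (-K) * z i + 1 * e i) - nrm n z * nrm n (fun i => (-K) * z i + 1 * e i)
  >= K * (sqrt zeta * (- hdot n (vJ lam z) z) - hdot n z z) - (sqrt zeta + 1) * (nrm n z * nrm n e).
Proof.
  intros Hz HK. rewrite hdot_lin2r.
  assert (Hv : nrm n (fun i => (-K) * z i + 1 * e i) <= K * nrm n z + nrm n e).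
  { eapply Rle_trans. apply (nrm_tri n (fun i => (-K) * z i) (fun i => 1 * e i)).
    rewrite !nrm_scal. rewrite Rabs_Ropp, Rabs_right, Rabs_R1 by lra. lra. }
  pose proof (CS_abs n (vJ lam z) e) as HC. rewrite nrm_J in HC.
  pose proof (Rle_abs (- hdot n (vJ lam z) e)) as HA. rewrite Rabs_Ropp in HA.
  pose proof (nrm_pos n z). pose proof (nrm_pos n e). pose proof (nrm_sq n z).
  pose proof (sp_gt1 zeta Hz).
  assert (nrm n z * nrm n (fun i => (-K) * z i + 1 * e i) <= nrm n z * (K * nrm n z + nrm n e)) by (apply Rmult_le_compat_l; auto).
  assert (sqrt zeta * hdot n (vJ lam z) e >= - (sqrt zeta * (nrm n z * nrm n e))) by nra.
  nra.
Qed.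

Section Piece1.
Variables (n lam : nat) (eps zeta : R) (p q : nat -> R).
Hypothesis Hln : (lam <= n)%nat.
Hypothesis Hl2 : (2 <= lam)%nat.
Hypothesis Hz : 1 < zeta.
Hypothesis Heps : 0 < eps.
Hypothesis Hp : inP n lam eps zeta p.
Hypothesis Hq : inbdF n lam eps zeta q.

Definition Ap := xp lam p.
Definition Yvp := yp lam p.
Definition Qx := xp lam q.
Definition Xp := hdot n Ap Ap.
Definition Yp := hdot n Yvp Yvp.

Lemma p_facts : 0 < Xp /\ 0 <= Yp /\ Xp + Yp < eps * eps /\ Psi n lam zeta p = sqrt zeta * (Xp - Yp) - (Xp + Yp)
  /\ Psi n lam zeta p > 0.
Proof.
  pose proof (inP_margin n lam eps zeta Hln Hz p Hp) as Hm.
  destruct Hp as [[HN1 HN2] _].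
  destruct (XY_facts n lam Hln p) as (E1 & E2 & P1 & P2). fold Ap Yvp Xp Yp in *.
  assert (HPsi : Psi n lam zeta p = sqrt zeta * (Xp - Yp) - (Xp + Yp)) by (unfold Psi; rewrite E1, E2; ring).
  rewrite HPsi in Hm. pose proof (sp_gt1 zeta Hz).
  rewrite E2 in HN2. simpl in HN2. repeat split; auto; try lra; try nra.
Qed.

Lemma isx_xp u : isx lam (xp lam u).
Proof. intros i Hi. unfold xp. replace (Nat.ltb i lam) with false; auto. symmetry; apply Nat.ltb_ge; auto. Qed.

Lemma isx_yp_orth v : isx lam v -> forall u, hdot n v (yp lam u) = 0.
Proof.
  intros Hv u. unfold hdot. rewrite (sumR_ext n _ (fun _ => 0 * 0)). rewrite sumR_scal; ring.
  intros i _. unfold yp. destruct (Nat.ltb_spec i lam). ring. rewrite Hv by lia. ring.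
Qed.

Lemma vJ_isx v : isx lam v -> vJ lam v = (fun i => -1 * v i).
Proof.
  intros Hv. apply functional_extensionality; intros i. unfold vJ. destruct (Nat.ltb_spec i lam). ring. rewrite Hv by lia. ring.
Qed.


Variables (Bv : nat -> R) (Th K : R).
Hypothesis HBx : isx lam Bv.
Hypothesis HAB : hdot n Ap Bv = 0.
Hypothesis HBB : hdot n Bv Bv = Xp.
Hypothesis HTh : 0 <= Th <= PI.
Hypothesis HK : K = 6 * (sqrt zeta + 1) * (Xp + Yp) / Psi n lam zeta p + 1.

Definition ph t := 3 * t * t - 2 * t * t * t.
Definition dph t := 6 * t - 6 * t * t.

Definition g1 i t := exp (- K * t) * (cos (Th * (3 * t * t - 2 * t * t * t)) * Ap i
   + sin (Th * (3 * t * t - 2 * t * t * t)) * Bv i + ((1 - t) * (1 - t)) * Yvp i).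
Definition dg1 i t := exp (- K * t) * (
    (- K * cos (Th * (3 * t * t - 2 * t * t * t)) - Th * (6 * t - 6 * t * t) * sin (Th * (3 * t * t - 2 * t * t * t))) * Ap i
  + (- K * sin (Th * (3 * t * t - 2 * t * t * t)) + Th * (6 * t - 6 * t * t) * cos (Th * (3 * t * t - 2 * t * t * t))) * Bv i
  + (- K * ((1 - t) * (1 - t)) - 2 * (1 - t)) * Yvp i).

Lemma g1_derive i t : is_derive (g1 i) t (dg1 i t).
Proof. unfold g1, dg1. auto_derive; auto. unfold Rminus. ring. Qed.

Lemma dg1_cont i t : continuous (dg1 i) t.
Proof.
  apply (ex_derive_continuous (K := R_AbsRing) (V := R_NormedModule)).
  unfold dg1. auto_derive. auto.
Qed.

Lemma g1_start i : (i < n)%nat -> g1 i 0 = p i.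
Proof.
  intros Hi. unfold g1. replace (Th * (3 * 0 * 0 - 2 * 0 * 0 * 0)) with 0 by ring.
  rewrite cos_0, sin_0. replace (- K * 0) with 0 by ring. rewrite exp_0.
  rewrite (xp_yp lam p i). unfold Ap, Yvp. ring.
Qed.

Lemma g1_end i : g1 i 1 = exp (- K) * (cos Th * Ap i + sin Th * Bv i)
   /\ dg1 i 1 = - K * exp (- K) * (cos Th * Ap i + sin Th * Bv i).
Proof.
  unfold g1, dg1. replace (Th * (3 * 1 * 1 - 2 * 1 * 1 * 1)) with Th by ring.
  replace (- K * 1) with (- K) by ring. split; ring.
Qed.

Lemma gram3 a1 b1 c1 a2 b2 c2 :
  hdot n (fun i => a1 * Ap i + b1 * Bv i + c1 * Yvp i) (fun i => a2 * Ap i + b2 * Bv i + c2 * Yvp i)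
  = (a1 * a2 + b1 * b2) * Xp + c1 * c2 * Yp.
Proof.
  rewrite hdot_lin3l, !hdot_lin3r.
  assert (H1 : hdot n Ap Yvp = 0) by (apply (hdot_xy n lam)).
  assert (H2 : hdot n Bv Yvp = 0) by (apply isx_yp_orth; auto).
  rewrite (hdot_sym n Bv Ap), (hdot_sym n Yvp Ap), (hdot_sym n Yvp Bv), H1, H2, HAB, HBB. unfold Xp, Yp. ring.
Qed.

Lemma vJ3 a b c : vJ lam (fun i => a * Ap i + b * Bv i + c * Yvp i) = (fun i => (-a) * Ap i + (-b) * Bv i + c * Yvp i).
Proof.
  apply functional_extensionality; intros i. unfold vJ.
  destruct (Nat.ltb_spec i lam).
  - unfold Yvp, yp. replace (Nat.ltb i lam) with true by (symmetry; apply Nat.ltb_lt; auto). ring.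
  - rewrite HBx by lia. unfold Ap. rewrite (isx_xp p i) by lia. ring.
Qed.


Lemma K_pos : 0 < K.
Proof.
  pose proof p_facts as (F1 & F2 & F3 & F4 & F5). pose proof (sp_gt1 zeta Hz).
  rewrite HK. assert (0 <= 6 * (sqrt zeta + 1) * (Xp + Yp) / Psi n lam zeta p) by (apply Rdiv_le_0_compat; nra). lra.
Qed.

Lemma z_form t : (fun i => g1 i t) = (fun i => (exp (- K * t) * cos (Th * (3 * t * t - 2 * t * t * t))) * Ap i
    + (exp (- K * t) * sin (Th * (3 * t * t - 2 * t * t * t))) * Bv i + (exp (- K * t) * ((1 - t) * (1 - t))) * Yvp i).
Proof. apply functional_extensionality; intros i; unfold g1; ring. Qed.

Lemma g1_hdot t : 0 <= t <= 1 ->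
   hdot n (fun i => g1 i t) (fun i => g1 i t) = exp (- K * t) * exp (- K * t) * (Xp + (1 - t) * (1 - t) * ((1 - t) * (1 - t)) * Yp).
Proof.
  intros Ht. rewrite z_form, gram3.
  set (ex := exp (- K * t)). set (th := Th * (3 * t * t - 2 * t * t * t)).
  assert (Hcs : cos th * cos th + sin th * sin th = 1) by (pose proof (sin2_cos2 th); unfold Rsqr in *; lra).
  replace (ex * cos th * (ex * cos th) + ex * sin th * (ex * sin th)) with (ex * ex * (cos th * cos th + sin th * sin th)) by ring.
  rewrite Hcs. ring.
Qed.

Lemma g1_N t : 0 <= t <= 1 -> inN n eps (fun i => g1 i t).
Proof.
  intros Ht. pose proof p_facts as (F1 & F2 & F3 & F4 & F5). pose proof K_pos as HK0.
  unfold inN. rewrite g1_hdot by auto.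
  set (ex := exp (- K * t)).
  assert (Hex : 0 < ex) by apply exp_pos.
  assert (Hex1 : ex <= 1).
  { unfold ex; rewrite <- exp_0. destruct (Req_dec t 0) as [->|Ht0].
    - replace (- K * 0) with 0 by ring. lra.
    - left. apply exp_increasing. assert (0 < K * t) by (apply Rmult_lt_0_compat; lra). lra. }
  assert (Hs : 0 <= (1 - t) * (1 - t)) by apply Rle_0_sqr.
  assert (Hs1 : (1 - t) * (1 - t) <= 1) by (assert (0 <= t * (2 - t)) by (apply Rmult_le_pos; lra); lra).
  assert (Hs4 : 0 <= (1 - t) * (1 - t) * ((1 - t) * (1 - t))) by (apply Rmult_le_pos; auto).
  assert (H4 : (1 - t) * (1 - t) * ((1 - t) * (1 - t)) <= 1).
  { apply Rle_trans with (1 * 1); [apply Rmult_le_compat; lra | lra]. }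
  assert (H3 : 0 <= (1 - t) * (1 - t) * ((1 - t) * (1 - t)) * Yp) by (apply Rmult_le_pos; auto).
  assert (H5 : (1 - t) * (1 - t) * ((1 - t) * (1 - t)) * Yp <= 1 * Yp) by (apply Rmult_le_compat_r; auto).
  assert (H6 : ex * ex <= 1) by (apply Rle_trans with (1 * 1); [apply Rmult_le_compat; lra | lra]).
  assert (H7 : 0 < ex * ex) by (apply Rmult_lt_0_compat; auto).
  split.
  - apply Rmult_lt_0_compat; lra.
  - replace (eps ^ 2) with (eps * eps) by ring.
    apply Rle_lt_trans with (1 * (Xp + Yp)); [|lra].
    apply Rmult_le_compat; lra.
Qed.


Lemma g1_T t : 0 <= t <= 1 -> fut_timelike n lam zeta (fun i => g1 i t) (fun i => dg1 i t).
Proof.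
  intros Ht. pose proof p_facts as (F1 & F2 & F3 & F4 & F5). pose proof K_pos as HK0.
  pose proof (sp_gt1 zeta Hz) as S1.
  set (ex := exp (- K * t)). set (th := Th * (3 * t * t - 2 * t * t * t)).
  set (T := Th * (6 * t - 6 * t * t)).
  assert (Hcs : cos th * cos th + sin th * sin th = 1) by (pose proof (sin2_cos2 th); unfold Rsqr in *; lra).
  assert (Hex : 0 < ex) by apply exp_pos.
  set (e := fun i => (ex * (- T * sin th)) * Ap i + (ex * (T * cos th)) * Bv i + (ex * (-2 * (1 - t))) * Yvp i).
  assert (Ev : (fun i => dg1 i t) = (fun i => (-K) * g1 i t + 1 * e i)).
  { apply functional_extensionality; intros i. unfold dg1, g1, e. fold ex th T. ring. }
  rewrite Ev. apply ft_of; auto.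
  pose proof (shrink_lemma n lam zeta (fun i => g1 i t) e K Hz ltac:(lra)) as HS.
  assert (HJ : hdot n (vJ lam (fun i => g1 i t)) (fun i => g1 i t) = ex * ex * ((1 - t) * (1 - t) * ((1 - t) * (1 - t)) * Yp - Xp)).
  { rewrite z_form. fold ex th. rewrite vJ3, gram3.
    replace (- (ex * cos th) * (ex * cos th) + - (ex * sin th) * (ex * sin th)) with (- (ex * ex * (cos th * cos th + sin th * sin th))) by ring.
    rewrite Hcs. ring. }
  assert (HZ := g1_hdot t Ht). fold ex in HZ.
  assert (HE : hdot n e e = ex * ex * (T * T * Xp + 4 * ((1 - t) * (1 - t)) * Yp)).
  { unfold e. rewrite gram3.
    replace (ex * (- T * sin th) * (ex * (- T * sin th)) + ex * (T * cos th) * (ex * (T * cos th))) with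
      (ex * ex * (T * T) * (cos th * cos th + sin th * sin th)) by ring.
    rewrite Hcs. ring. }
  assert (HT0 : 0 <= T <= 6).
  { unfold T. pose proof PI_4.
    assert (0 <= t * (1 - t)) by (apply Rmult_le_pos; lra).
    pose proof (Rle_0_sqr (2 * t - 1)). unfold Rsqr in *.
    assert (0 <= 6 * t - 6 * t * t <= 3 / 2) by lra.
    split. apply Rmult_le_pos; lra.
    apply Rle_trans with (4 * (3/2)); [apply Rmult_le_compat; lra|lra]. }
  assert (Hs : 0 <= (1 - t) * (1 - t)) by apply Rle_0_sqr.
  assert (Hs1 : (1 - t) * (1 - t) <= 1) by (assert (0 <= t * (2 - t)) by (apply Rmult_le_pos; lra); lra).
  assert (Hs4 : 0 <= (1 - t) * (1 - t) * ((1 - t) * (1 - t))) by (apply Rmult_le_pos; auto).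
  assert (H4 : (1 - t) * (1 - t) * ((1 - t) * (1 - t)) <= 1).
  { apply Rle_trans with (1 * 1); [apply Rmult_le_compat; lra | lra]. }
  assert (Hzb : hdot n (fun i => g1 i t) (fun i => g1 i t) <= ex * ex * (Xp + Yp)).
  { rewrite HZ. apply Rmult_le_compat_l. apply Rmult_le_pos; lra.
    assert ((1 - t) * (1 - t) * ((1 - t) * (1 - t)) * Yp <= 1 * Yp) by (apply Rmult_le_compat_r; lra). lra. }
  assert (Heb : hdot n e e <= 36 * (ex * ex * (Xp + Yp))).
  { rewrite HE. replace (36 * (ex * ex * (Xp + Yp))) with (ex * ex * (36 * Xp + 36 * Yp)) by ring.
    apply Rmult_le_compat_l. apply Rmult_le_pos; lra.
    assert (T * T <= 36) by (apply Rle_trans with (6 * 6); [apply Rmult_le_compat; lra|lra]).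
    assert (T * T * Xp <= 36 * Xp) by (apply Rmult_le_compat_r; lra).
    assert (4 * ((1 - t) * (1 - t)) * Yp <= 36 * Yp) by (apply Rmult_le_compat_r; lra). lra. }
  assert (Hne : nrm n (fun i => g1 i t) * nrm n e <= 6 * (ex * ex * (Xp + Yp))).
  { pose proof (nrm_pos n (fun i => g1 i t)). pose proof (nrm_pos n e).
    assert (0 <= ex * ex * (Xp + Yp)) by (apply Rmult_le_pos; [apply Rmult_le_pos|]; lra).
    assert (Hm : nrm n (fun i => g1 i t) * nrm n e * (nrm n (fun i => g1 i t) * nrm n e) <=
                 (6 * (ex * ex * (Xp + Yp))) * (6 * (ex * ex * (Xp + Yp)))).
    { replace (nrm n (fun i => g1 i t) * nrm n e * (nrm n (fun i => g1 i t) * nrm n e)) with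
        ((nrm n (fun i => g1 i t) * nrm n (fun i => g1 i t)) * (nrm n e * nrm n e)) by ring.
      rewrite !nrm_sq.
      replace ((6 * (ex * ex * (Xp + Yp))) * (6 * (ex * ex * (Xp + Yp)))) with ((ex * ex * (Xp + Yp)) * (36 * (ex * ex * (Xp + Yp)))) by ring.
      apply Rmult_le_compat; auto; apply hdot_pos. }
    destruct (Rle_lt_dec (nrm n (fun i => g1 i t) * nrm n e) (6 * (ex * ex * (Xp + Yp)))) as [|Hlt]; auto.
    exfalso. assert (H6p : 0 <= 6 * (ex * ex * (Xp + Yp))) by lra. pose proof (sq_lt _ _ H6p Hlt). lra. }
  assert (Hmarg : sqrt zeta * (- hdot n (vJ lam (fun i => g1 i t)) (fun i => g1 i t)) - hdot n (fun i => g1 i t) (fun i => g1 i t)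
          >= ex * ex * Psi n lam zeta p).
  { rewrite HJ, HZ, F4.
    assert (0 <= (sqrt zeta + 1) * (1 - (1 - t) * (1 - t) * ((1 - t) * (1 - t))) * Yp) by (apply Rmult_le_pos; [apply Rmult_le_pos|]; lra).
    assert (0 < ex * ex) by (apply Rmult_lt_0_compat; auto).
    assert (ex * ex * ((sqrt zeta + 1) * (1 - (1 - t) * (1 - t) * ((1 - t) * (1 - t))) * Yp) >= 0) by (apply Rle_ge, Rmult_le_pos; lra).
    replace (sqrt zeta * - (ex * ex * ((1 - t) * (1 - t) * ((1 - t) * (1 - t)) * Yp - Xp)) -
       ex * ex * (Xp + (1 - t) * (1 - t) * ((1 - t) * (1 - t)) * Yp))
       with (ex * ex * (sqrt zeta * (Xp - Yp) - (Xp + Yp)) + ex * ex * ((sqrt zeta + 1) * (1 - (1 - t) * (1 - t) * ((1 - t) * (1 - t))) * Yp)) by ring.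
    lra. }
  assert (HKm : K * Psi n lam zeta p = 6 * (sqrt zeta + 1) * (Xp + Yp) + Psi n lam zeta p) by (rewrite HK; field; lra).
  assert (0 < ex * ex) by (apply Rmult_lt_0_compat; auto).
  assert (HA1 : K * (ex * ex * Psi n lam zeta p) <= K * (sqrt zeta * (- hdot n (vJ lam (fun i => g1 i t)) (fun i => g1 i t)) - hdot n (fun i => g1 i t) (fun i => g1 i t)))
    by (apply Rmult_le_compat_l; lra).
  assert (HA2 : (sqrt zeta + 1) * (nrm n (fun i => g1 i t) * nrm n e) <= (sqrt zeta + 1) * (6 * (ex * ex * (Xp + Yp))))
    by (apply Rmult_le_compat_l; lra).
  assert (HA3 : K * (ex * ex * Psi n lam zeta p) - (sqrt zeta + 1) * (6 * (ex * ex * (Xp + Yp))) = ex * ex * Psi n lam zeta p).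
  { replace (K * (ex * ex * Psi n lam zeta p)) with (ex * ex * (K * Psi n lam zeta p)) by ring. rewrite HKm. ring. }
  assert (0 < ex * ex * Psi n lam zeta p) by (apply Rmult_lt_0_compat; lra).
  lra.
Qed.

End Piece1.


Lemma part_iiia n lam eps zeta (Hln : (lam <= n)%nat) (Hl2 : (2 <= lam)%nat) (Hz : 1 < zeta) (Heps : 0 < eps) q p :
  inbdF n lam eps zeta q -> inP n lam eps zeta p -> chron n lam eps zeta p q.
Proof.
  intros Hq Hp.
  pose proof (p_facts n lam eps zeta p Hln Hz Hp) as (F1 & F2 & F3 & F4 & F5).
  pose proof (q_facts n lam eps zeta q Hln Hz Hq) as (G1 & G2 & G3 & G4).
  destruct (rot_exists n lam Hln Hl2 (Ap lam p) (xp lam q) (isx_xp lam p) (isx_xp lam q) F1 G1)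
    as [Bv [Th [HBx [HAB [HBB [HTh Hrot]]]]]].
  set (K := 6 * (sqrt zeta + 1) * (Xp n lam p + Yp n lam p) / Psi n lam zeta p + 1).
  assert (HK : K = 6 * (sqrt zeta + 1) * (Xp n lam p + Yp n lam p) / Psi n lam zeta p + 1) by reflexivity.
  pose proof (sp_gt1 zeta Hz) as S1.
  assert (HK0 : 0 < K).
  { rewrite HK. assert (0 <= 6 * (sqrt zeta + 1) * (Xp n lam p + Yp n lam p) / Psi n lam zeta p).
    { apply Rdiv_le_0_compat; [|lra]. apply Rmult_le_pos; lra. } lra. }
  set (nA := nrm n (Ap lam p)).
  assert (HnA : 0 < nA) by (unfold nA, nrm; apply sqrt_lt_R0; auto).
  assert (HnAe : nA < eps).
  { unfold nA. apply nrm_lt_eps; auto. fold (Xp n lam p). lra. }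
  set (X0 := exp (- K) * nA).
  assert (Hek : exp (- K) < 1) by (rewrite <- exp_0; apply exp_increasing; lra).
  assert (HX0 : 0 < X0) by (unfold X0; apply Rmult_lt_0_compat; [apply exp_pos|auto]).
  assert (HX0e : X0 < eps).
  { unfold X0. apply Rle_lt_trans with (1 * nA); [|lra]. apply Rmult_le_compat_r; lra. }
  assert (Hrq : 0 < rq n lam q) by (apply (rq_pos n lam eps zeta q Hln Hz Hq)).
  assert (Hrq2 : rq n lam q = nrm n (xp lam q)) by reflexivity.
  apply (glue n lam eps zeta p q (g1 lam p Bv Th K) (dg1 lam p Bv Th K) (g2 n lam q X0) (dg2 n lam q X0) (1 / (2 * K)) Hz).
  - apply Rdiv_lt_0_compat; lra.
  - apply g1_derive.
  - apply dg1_cont.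
  - apply g1_start.
  - apply (g1_N n lam eps zeta p Hln Hl2 Hz Hp Bv Th K HBx HAB HBB HK).
  - apply (g1_T n lam eps zeta p Hln Hl2 Hz Hp Bv Th K HBx HAB HBB HTh HK).
  - apply (g2_derive n lam eps zeta q X0 Hln Hz Hq HX0).
  - apply (dg2_cont n lam eps zeta q X0 Hln Hz Hq HX0).
  - apply (g2_end n lam eps zeta q X0 Hln Hz Hq).
  - apply (g2_N n lam eps zeta q X0 Hln Hz Hq HX0 HX0e Heps).
  - apply (g2_T n lam eps zeta q X0 Hln Hz Hq HX0).
  - intros i. destruct (g1_end lam p Bv Th K i) as [E1 _]. destruct (g2_start n lam eps zeta q X0 Hln Hz Hq HX0 i) as [E2 _].
    rewrite E1, E2, Hrot. fold nA. rewrite <- Hrq2. unfold X0. field. lra.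
  - intros i. destruct (g1_end lam p Bv Th K i) as [_ E1]. destruct (g2_start n lam eps zeta q X0 Hln Hz Hq HX0 i) as [_ E2].
    rewrite E1, E2, Hrot. fold nA. rewrite <- Hrq2. unfold X0. field. lra.
Qed.


Theorem claim1 (n lam : nat) (eps zeta : R)
  (Hn : (3 <= n)%nat) (Hlam1 : (1 <= lam)%nat) (Hlam2 : (lam <= n - 1)%nat)
  (Heps : 0 < eps) (Hzeta : 1 < zeta) :
  (* (i) *)
  (forall q, inF n lam eps zeta q ->
     forall p, inP n lam eps zeta p -> chron n lam eps zeta p q) /\
  (* (ii) *)
  (forall q, inbdF n lam eps zeta q ->
     forall p, chron n lam eps zeta q p -> inF n lam eps zeta p) /\
  (* (iii)(a) *)
  (forall q, inbdF n lam eps zeta q -> lam <> 1%nat ->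
     forall p, inP n lam eps zeta p -> chron n lam eps zeta p q) /\
  (* (iii)(b) *)
  (forall q, inbdF n lam eps zeta q -> lam = 1%nat ->
     (forall p, inP2 n lam eps zeta p -> ~ chron n lam eps zeta p q) \/
     (forall p, inP1 n lam eps zeta p -> ~ chron n lam eps zeta p q)).
Proof.
  assert (Hln : (lam <= n)%nat) by lia.
  split; [|split; [|split]].
  - intros q Hq p Hp. apply (part_i n lam eps zeta Hln Hzeta Heps q p Hq Hp).
  - intros q Hq p Hc. apply (part_ii n lam eps zeta Hln Hzeta q Hq p Hc).
  - intros q Hq Hl p Hp. apply (part_iiia n lam eps zeta Hln ltac:(lia) Hzeta Heps q p Hq Hp).
  - intros q Hq Hl. apply (part_iiib n lam eps zeta Hln Hzeta ltac:(lia) q Hq Hl).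
Qed.
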